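(* Let $\alpha>0$, $\sigma>0$, and let $U,V$ be the continuous linear operators on $\mathcal E^1_{\min}(\mathbb C)$ described in the context. Then, as continuous linear operators on $\mathcal E^1_{\min}(\mathbb C)$, $$U=Z\,E_{-\alpha},\qquad V=E_\alpha,$$ i.e. $(Uf)(z)=zf(z-\alpha)$ and $(Vf)(z)=f(z+\alpha)$ for all $f\in\mathcal E^1_{\min}(\mathbb C)$, $z\in\mathbb C$.
   Context: $\mathcal E^1_{\min}(\mathbb C)$ is the Fréchet space of entire functions $f$ with $\sup_{z\in\mathbb C}|f(z)|e^{-|z|/n}<\infty$ for all $n\in\mathbb N$, topologized by these norms. Let $\pi_{\alpha,\sigma}=\exp(-\sigma/\alpha^2)\sum_{n\ge0}\frac{1}{n!}(\sigma/\alpha^2)^n\delta_{\alpha n}$ on $\alpha\mathbb N_0$ and let $(c_n)_{n\ge0}$ be the monic polynomials orthogonal with respect to it, with generating function $\sum_{n\ge0}\frac{t^n}{n!}c_n(z)=\exp\big(\frac z\alpha\log(1+t\alpha)-\frac{\sigma t}{\alpha}\big)$. Let $\mathcal S$ be the linear bijection of $\mathbb C[z]$ with $\mathcal Sc_n=z^n$. Let $Z$ be multiplication by $z$, $D$ differentiation, and $E_h$ the shift $(E_hf)(z)=f(z+h)$. Define on $\mathbb C[z]$ the operators $\mathcal U=Z+\sigma/\alpha$, $\mathcal V=\alpha D+1$, and $U=\mathcal S^{-1}\mathcal U\mathcal S$, $V=\mathcal S^{-1}\mathcal V\mathcal S$; equivalently $U=\partial^++\sigma/\alpha$ and $V=\alpha\partial^-+1$,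 where $\partial^+c_n=c_{n+1}$ and $\partial^-c_n=nc_{n-1}$. The operators $U$, $V$, $Z$ and $E_h$ ($h\in\mathbb C$) extend uniquely to continuous linear operators on $\mathcal E^1_{\min}(\mathbb C)$, denoted by the same symbols. *)

(* Defs.v *)
From Stdlib Require Import Reals.
From Coquelicot Require Import Coquelicot.
Open Scope R_scope.

Fixpoint Csum (a : nat -> C) (N : nat) : C :=
  match N with
  | O => RtoC 0
  | S n => Cplus (Csum a n) (a n)
  end.

Definition entire (f : C -> C) : Prop :=
  forall z : C, ex_derive (K := C_AbsRing) (V := C_NormedModule) f z.

Definition wbound (n : nat) (f : C -> C) (M : R) : Prop :=
  forall z : C, Cmod (f z) * exp (- Cmod z / INR n) <= M.

Definition E1min (f : C -> C) : Prop :=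
  entire f /\ forall n : nat, (1 <= n)%nat -> exists M : R, wbound n f M.

Definition E1min_linear (T : (C -> C) -> (C -> C)) : Prop :=
  (forall f, E1min f -> E1min (T f)) /\
  (forall f g, E1min f -> E1min g ->
     forall z, T (fun w => Cplus (f w) (g w)) z = Cplus (T f z) (T g z)) /\
  (forall (c : C) f, E1min f ->
     forall z, T (fun w => Cmult c (f w)) z = Cmult c (T f z)).

(* continuity w.r.t. the (increasing) family of seminorms
   p_n(f) = sup_z |f(z)| e^{-|z|/n}: for all n there are m and C with
   p_n(T f) <= C p_m(f) for f in E^1_min. *)
Definition E1min_continuous (T : (C -> C) -> (C -> C)) : Prop :=
  forall n : nat, (1 <= n)%nat ->
  exists (m : nat) (K : R), (1 <= m)%nat /\ 0 <= K /\
    forall f, E1min f -> forall M, wbound m f M -> wbound n (T f) (K * M).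

Fixpoint falling (a : R) (z : C) (k : nat) : C :=
  match k with
  | O => RtoC 1
  | S j => Cmult (falling a z j) (Cminus z (RtoC (INR j * a)))
  end.

Fixpoint Cpow (x : C) (k : nat) : C :=
  match k with
  | O => RtoC 1
  | S j => Cmult (Cpow x j) x
  end.

(* Charlier-type polynomials c_n: the coefficient of t^n/n! in
   exp((z/a) log(1 + t a) - s t / a) = (1+ta)^{z/a} e^{-st/a}, i.e.
   c_n(z) = sum_{k=0}^n C(n,k) z(z-a)...(z-(k-1)a) (-s/a)^{n-k}. *)
Definition charlier (a s : R) (n : nat) (z : C) : C :=
  Csum (fun k => Cmult (RtoC (Binomial.C n k))
                   (Cmult (falling a z k) (Cpow (RtoC (- s / a)) (n - k))))
       (S n).

Definition cpoly (a s : R) (co : nat -> C) (N : nat) (z : C) : C :=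
  Csum (fun k => Cmult (co k) (charlier a s k z)) N.

(* U = d^+ + s/a on C[z], where d^+ c_k = c_{k+1} *)
Definition U_poly (a s : R) (co : nat -> C) (N : nat) (z : C) : C :=
  Csum (fun k => Cmult (co k)
          (Cplus (charlier a s (S k) z) (Cmult (RtoC (s / a)) (charlier a s k z)))) N.

(* V = a d^- + 1 on C[z], where d^- c_k = k c_{k-1} (d^- c_0 = 0) *)
Definition V_poly (a s : R) (co : nat -> C) (N : nat) (z : C) : C :=
  Csum (fun k => Cmult (co k)
          (Cplus (Cmult (RtoC (a * INR k)) (charlier a s (Nat.pred k) z))
                 (charlier a s k z))) N.

(* Main.v *)
Require Import Defs.
From Stdlib Require Import Reals.
From Coquelicot Require Import Coquelicot.
Open Scope R_scope.
From Stdlib Require Import Lia Lra.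

Lemma Csum_ext (a b : nat -> C) N :
  (forall k, (k < N)%nat -> a k = b k) -> Csum a N = Csum b N.
Proof.
  induction N as [|N IH]; intros H; simpl; auto.
  rewrite IH by (intros; apply H; lia). rewrite (H N) by lia. reflexivity.
Qed.

Lemma Csum_plus (a b : nat -> C) N :
  Csum (fun k => Cplus (a k) (b k)) N = Cplus (Csum a N) (Csum b N).
Proof.
  induction N as [|N IH]; simpl.
  - apply injective_projections; simpl; ring.
  - rewrite IH. ring.
Qed.

Lemma Csum_scal (c : C) (a : nat -> C) N :
  Csum (fun k => Cmult c (a k)) N = Cmult c (Csum a N).
Proof.
  induction N as [|N IH]; simpl.
  - apply injective_projections; simpl; ring.
  - rewrite IH. ring.
Qed.

Lemma Csum_shift (a : nat -> C) N :
  Csum a (S N) = Cplus (a O) (Csum (fun k => a (S k)) N).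
Proof.
  induction N as [|N IH].
  - simpl. ring.
  - change (Csum a (S (S N))) with (Cplus (Csum a (S N)) (a (S N))).
    rewrite IH. simpl. ring.
Qed.

Lemma Csum_zero N : Csum (fun _ => RtoC 0) N = RtoC 0.
Proof. induction N; simpl; auto. rewrite IHN. ring. Qed.

Lemma Csum_pad (a : nat -> C) N m :
  (forall k, (N <= k)%nat -> a k = RtoC 0) -> Csum a (N + m) = Csum a N.
Proof.
  intros H; induction m as [|m IH].
  - rewrite Nat.add_0_r; auto.
  - rewrite Nat.add_succ_r. simpl. rewrite IH, (H (N+m)%nat) by lia. ring.
Qed.

Section Alg.
Variables (a s : R).

Lemma falling_shift z k :
  Cmult z (falling a (Cminus z (RtoC a)) k) = falling a z (S k).
Proof.
  induction k as [|k IH].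
  - simpl. rewrite Rmult_0_l. ring.
  - change (falling a (Cminus z a) (S k)) with
      (Cmult (falling a (Cminus z a) k) (Cminus (Cminus z a) (RtoC (INR k * a)))).
    change (falling a z (S (S k))) with
      (Cmult (falling a z (S k)) (Cminus z (RtoC (INR (S k) * a)))).
    rewrite <- IH. rewrite S_INR, !RtoC_mult, RtoC_plus. ring.
Qed.

Lemma falling_plus z k :
  falling a (Cplus z (RtoC a)) (S k) =
  Cplus (falling a z (S k)) (Cmult (RtoC (INR (S k) * a)) (falling a z k)).
Proof.
  rewrite <- falling_shift.
  replace (Cminus (Cplus z a) a) with z by ring.
  change (falling a z (S k)) with
      (Cmult (falling a z k) (Cminus z (RtoC (INR k * a)))).
  rewrite S_INR, !RtoC_mult, RtoC_plus. ring.
Qed.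

Definition Bn (n k : nat) : R := if Nat.leb k n then Binomial.C n k else 0.

Lemma C_n_0' n : Binomial.C n 0 = 1.
Proof. unfold Binomial.C. rewrite Nat.sub_0_r. simpl. field. apply INR_fact_neq_0. Qed.

Lemma C_n_n' n : Binomial.C n n = 1.
Proof. unfold Binomial.C. rewrite Nat.sub_diag. simpl. field. apply INR_fact_neq_0. Qed.

Lemma Bn_pascal n j : Bn (S n) (S j) = Bn n j + Bn n (S j).
Proof.
  unfold Bn.
  destruct (Nat.ltb_spec j n).
  - rewrite (proj2 (Nat.leb_le (S j) (S n))) by lia.
    rewrite (proj2 (Nat.leb_le j n)) by lia.
    rewrite (proj2 (Nat.leb_le (S j) n)) by lia.
    symmetry; apply Binomial.pascal; auto.
  - destruct (Nat.eqb_spec j n).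
    + subst. rewrite (proj2 (Nat.leb_le (S n) (S n))) by lia.
      rewrite (proj2 (Nat.leb_le n n)) by lia.
      rewrite (proj2 (Nat.leb_nle (S n) n)) by lia.
      rewrite !C_n_n'. ring.
    + rewrite (proj2 (Nat.leb_nle (S j) (S n))) by lia.
      rewrite (proj2 (Nat.leb_nle j n)) by lia.
      rewrite (proj2 (Nat.leb_nle (S j) n)) by lia. ring.
Qed.

Lemma C_succ_mul m j : (j <= m)%nat ->
  INR (S j) * Binomial.C (S m) (S j) = INR (S m) * Binomial.C m j.
Proof.
  intros Hj. unfold Binomial.C. simpl (S m - S j)%nat.
  rewrite !fact_simpl, !mult_INR.
  field. repeat split; try apply INR_fact_neq_0; apply not_0_INR; lia.
Qed.

Definition w := RtoC (- s / a).

Lemma charlier_B n z L : (S n <= L)%nat ->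
  charlier a s n z =
  Csum (fun k => Cmult (RtoC (Bn n k)) (Cmult (falling a z k) (Defs.Cpow w (n - k)))) L.
Proof.
  intros HL. unfold charlier.
  replace L with (S n + (L - S n))%nat by lia.
  rewrite Csum_pad.
  - apply Csum_ext. intros k Hk. unfold Bn, w.
    rewrite (proj2 (Nat.leb_le k n)) by lia. reflexivity.
  - intros k Hk. unfold Bn. rewrite (proj2 (Nat.leb_nle k n)) by lia.
    ring.
Qed.

Lemma charlier_rec_a n z :
  charlier a s (S n) z =
  Cplus (Cmult z (charlier a s n (Cminus z (RtoC a)))) (Cmult w (charlier a s n z)).
Proof.
  rewrite (charlier_B (S n) z (S (S n))) by lia.
  rewrite (charlier_B n (Cminus z a) (S n)) by lia.
  rewrite (charlier_B n z (S (S n))) by lia.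
  rewrite Csum_shift. rewrite (Csum_shift _ (S n)).
  assert (E1 : forall j, Bn (S n) (S j) = Bn n j + Bn n (S j)) by apply Bn_pascal.
  assert (Hs : Csum (fun k => Cmult (RtoC (Bn (S n) (S k)))
                 (Cmult (falling a z (S k)) (Defs.Cpow w (S n - S k)))) (S n) =
     Cplus (Csum (fun k => Cmult z (Cmult (RtoC (Bn n k))
                 (Cmult (falling a (Cminus z a) k) (Defs.Cpow w (n - k))))) (S n))
           (Csum (fun k => Cmult w (Cmult (RtoC (Bn n (S k)))
                 (Cmult (falling a z (S k)) (Defs.Cpow w (n - S k))))) (S n))).
  { rewrite <- Csum_plus. apply Csum_ext. intros j Hj.
    rewrite E1, RtoC_plus. simpl (S n - S j)%nat.
    rewrite <- falling_shift.
    destruct (Nat.leb_spec (S j) n).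
    - replace (n - j)%nat with (S (n - S j)) by lia. simpl Defs.Cpow. ring.
    - unfold Bn at 2 4. rewrite (proj2 (Nat.leb_nle (S j) n)) by lia. ring. }
  rewrite Hs, !Csum_scal.
  assert (HB0 : forall m, Bn m 0 = 1) by (intros; unfold Bn; simpl; apply C_n_0').
  rewrite !HB0, !Nat.sub_0_r.
  change (Defs.Cpow w (S n)) with (Cmult (Defs.Cpow w n) w).
  simpl falling. ring.
Qed.

Lemma charlier_rec_b n z :
  charlier a s n (Cplus z (RtoC a)) =
  Cplus (charlier a s n z) (Cmult (RtoC (a * INR n)) (charlier a s (Nat.pred n) z)).
Proof.
  destruct n as [|m].
  - unfold charlier. simpl. rewrite Rmult_0_r. ring.
  - unfold charlier at 1 2. rewrite (Csum_shift _ (S m)). rewrite (Csum_shift _ (S m)).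
    simpl falling at 1 3. simpl Nat.pred.
    rewrite <- Cplus_assoc. f_equal.
    unfold charlier. rewrite <- Csum_scal, <- Csum_plus. apply Csum_ext.
    intros j Hj. simpl (S m - S j)%nat. rewrite falling_plus.
    assert (H := C_succ_mul m j ltac:(lia)).
    assert (E : Cmult (RtoC (a * INR (S m))) (RtoC (Binomial.C m j)) =
               Cmult (RtoC (Binomial.C (S m) (S j))) (RtoC (INR (S j) * a))).
    { rewrite <- !RtoC_mult. f_equal. transitivity (a * (INR (S m) * Binomial.C m j)); [ring|]. rewrite <- H. ring. }
    transitivity (Cplus (Cmult (RtoC (Binomial.C (S m) (S j)))
                        (Cmult (falling a z (S j)) (Defs.Cpow w (m - j))))
          (Cmult (Cmult (RtoC (a * INR (S m))) (RtoC (Binomial.C m j)))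
                  (Cmult (falling a z j) (Defs.Cpow w (m - j))))).
    + unfold w. rewrite E. ring.
    + unfold w. ring.
Qed.

Lemma charlier_three n z :
  Cmult z (charlier a s n z) =
  Cplus (Cplus (charlier a s (S n) z)
               (Cmult (Cminus (RtoC (a * INR n)) w) (charlier a s n z)))
        (Copp (Cmult (Cmult w (RtoC (a * INR n))) (charlier a s (Nat.pred n) z))).
Proof.
  assert (Ha := charlier_rec_a n (Cplus z a)).
  replace (Cminus (Cplus z a) a) with z in Ha by ring.
  assert (Hb1 := charlier_rec_b (S n) z). simpl Nat.pred in Hb1.
  assert (Hb2 := charlier_rec_b n z).
  rewrite Hb1, Hb2 in Ha.
  assert (K : Cmult z (charlier a s n z) =
    Cminus (Cminus (Cplus (charlier a s (S n) z) (Cmult (RtoC (a * INR (S n))) (charlier a s n z)))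
       (Cmult (RtoC a) (charlier a s n z)))
       (Cmult w (Cplus (charlier a s n z) (Cmult (RtoC (a * INR n)) (charlier a s (Nat.pred n) z))))).
  { rewrite Ha. ring. }
  rewrite K, S_INR, Rmult_plus_distr_l, Rmult_1_r, RtoC_plus. ring.
Qed.

Lemma U_poly_eq co N z :
  U_poly a s co N z = Cmult z (cpoly a s co N (Cminus z (RtoC a))).
Proof.
  unfold U_poly, cpoly. rewrite <- Csum_scal. apply Csum_ext. intros k _.
  rewrite charlier_rec_a. unfold w.
  replace (- s / a)%R with (- (s / a))%R by (unfold Rdiv; ring).
  rewrite RtoC_opp. ring.
Qed.

Lemma V_poly_eq co N z :
  V_poly a s co N z = cpoly a s co N (Cplus z (RtoC a)).
Proof.
  unfold V_poly, cpoly. apply Csum_ext. intros k _.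
  rewrite charlier_rec_b. ring.
Qed.

Definition inS (L : nat) (p : C -> C) :=
  exists co, forall z, p z = cpoly a s co L z.

Lemma inS_ext L p q : (forall z, p z = q z) -> inS L p -> inS L q.
Proof. intros E [co H]. exists co. intros z. rewrite <- E. auto. Qed.

Lemma inS_S L p : inS L p -> inS (S L) p.
Proof.
  intros [co H]. exists (fun k => if Nat.eqb k L then RtoC 0 else co k).
  intros z. rewrite H. unfold cpoly. simpl. rewrite Nat.eqb_refl.
  replace (Cmult (RtoC 0) (charlier a s L z)) with (RtoC 0) by ring.
  rewrite Cplus_0_r. apply Csum_ext. intros k Hk.
  rewrite (proj2 (Nat.eqb_neq k L)) by lia. reflexivity.
Qed.

Lemma inS_le L L' p : (L <= L')%nat -> inS L p -> inS L' p.
Proof. induction 1; auto. intros; apply inS_S; auto. Qed.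

Lemma inS_plus L p q : inS L p -> inS L q -> inS L (fun z => Cplus (p z) (q z)).
Proof.
  intros [c1 H1] [c2 H2]. exists (fun k => Cplus (c1 k) (c2 k)).
  intros z. rewrite H1, H2. unfold cpoly. rewrite <- Csum_plus.
  apply Csum_ext. intros; ring.
Qed.

Lemma inS_scal L c p : inS L p -> inS L (fun z => Cmult c (p z)).
Proof.
  intros [c1 H1]. exists (fun k => Cmult c (c1 k)).
  intros z. rewrite H1. unfold cpoly. rewrite <- Csum_scal.
  apply Csum_ext. intros; ring.
Qed.

Lemma inS_zero L : inS L (fun _ => RtoC 0).
Proof.
  exists (fun _ => RtoC 0). intros z. unfold cpoly.
  symmetry. rewrite (Csum_ext _ (fun _ => RtoC 0)); [apply Csum_zero| intros; ring].
Qed.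

Lemma inS_basis j L : (j < L)%nat -> inS L (charlier a s j).
Proof.
  intros HL. apply (inS_le (S j)); [lia|].
  exists (fun k => if Nat.eqb k j then RtoC 1 else RtoC 0).
  intros z. unfold cpoly. simpl. rewrite Nat.eqb_refl.
  rewrite (Csum_ext _ (fun _ => RtoC 0)).
  - rewrite Csum_zero. ring.
  - intros k Hk. rewrite (proj2 (Nat.eqb_neq k j)) by lia. ring.
Qed.

Lemma inS_Z_cpoly co L : inS (S L) (fun z => Cmult z (cpoly a s co L z)).
Proof.
  induction L as [|L IH].
  - apply (inS_ext _ (fun _ => RtoC 0)); [intros; unfold cpoly; simpl; ring|].
    apply inS_zero.
  - apply (inS_ext _ (fun z => Cplus (Cmult z (cpoly a s co L z))
                               (Cmult (co L) (Cmult z (charlier a s L z))))).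
    { intros z. unfold cpoly. simpl. ring. }
    apply inS_plus; [apply inS_S; auto|].
    apply inS_scal.
    eapply inS_ext; [intros z; symmetry; apply charlier_three|].
    apply inS_plus; [apply inS_plus|].
    + apply inS_basis; lia.
    + apply inS_scal, inS_basis; lia.
    + apply (inS_ext _ (fun z => Cmult (Copp (Cmult w (RtoC (a * INR L))))
                                    (charlier a s (Nat.pred L) z))).
      { intros; ring. }
      apply inS_scal, inS_basis; lia.
Qed.

Lemma inS_Z L p : inS L p -> inS (S L) (fun z => Cmult z (p z)).
Proof.
  intros [co H]. eapply inS_ext; [|apply (inS_Z_cpoly co L)].
  intros z; rewrite H; auto.
Qed.

Definition Pm (b : nat -> C) (N : nat) (z : C) : C :=
  Csum (fun k => Cmult (b k) (Defs.Cpow z k)) N.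

Lemma inS_pow k : inS (S k) (fun z => Defs.Cpow z k).
Proof.
  induction k as [|k IH].
  - eapply inS_ext; [|apply (inS_basis 0 1); lia].
    intros z. unfold charlier. simpl. rewrite C_n_0'. ring.
  - eapply inS_ext; [|apply inS_Z; apply IH].
    intros z. simpl. ring.
Qed.

Lemma inS_Pm b N : inS N (Pm b N).
Proof.
  induction N as [|N IH].
  - eapply inS_ext; [|apply (inS_zero 0)]. intros; reflexivity.
  - eapply inS_ext; [|apply inS_plus; [apply inS_S, IH| apply inS_scal, inS_pow]].
    intros z; reflexivity.
Qed.

End Alg.

Lemma isd_eps {K : AbsRing} {V : NormedModule K} (f : K -> V) x l :
  is_derive f x l -> forall eps, 0 < eps -> exists d, 0 < d /\ forall y,
    abs (minus y x) < d ->
    norm (minus (minus (f y) (f x)) (scal (minus y x) l)) <= eps * abs (minus y x).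
Proof.
  intros [_ Hd] eps He.
  assert (Hx : is_filter_lim (locally x) x) by (intros P HP; exact HP).
  destruct (Hd x Hx (mkposreal eps He)) as [[d Hdp] Hd']. exists d. split; auto.
Qed.

Lemma eps_isd {K : AbsRing} {V : NormedModule K} (f : K -> V) x l :
  (forall eps, 0 < eps -> exists d, 0 < d /\ forall y,
    abs (minus y x) < d ->
    norm (minus (minus (f y) (f x)) (scal (minus y x) l)) <= eps * abs (minus y x)) ->
  is_derive f x l.
Proof.
  intros H. split; [apply is_linear_scal_l|].
  intros y Hy. apply (is_filter_lim_locally_unique (K:=K) (V:=AbsRing_NormedModule K)) in Hy. subst y.
  intros [eps He]. destruct (H eps He) as [d [Hd H']].
  exists (mkposreal d Hd). intros y Hy. apply H'. exact Hy.
Qed.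

Lemma CR_scal (r : R) (v : C) : @scal R_Ring C_R_ModuleSpace r v = Cmult (RtoC r) v.
Proof. destruct v as [v1 v2]. unfold scal. simpl. unfold prod_scal. simpl. unfold scal; simpl. unfold mult; simpl. unfold Cmult, RtoC; simpl.
 f_equal; ring. Qed.

Lemma CR_norm (v : C) : @norm R_AbsRing C_R_NormedModule v = Cmod v.
Proof.
  unfold norm; simpl. unfold prod_norm, Cmod. simpl. unfold norm; simpl. unfold abs; simpl.
  rewrite !Rmult_1_r. f_equal. rewrite <- !Rabs_mult, !Rabs_pos_eq; try apply Rle_0_sqr. reflexivity.
Qed.

Lemma CR_minus (u v : C) : @minus C_R_NormedModule u v = Cminus u v.
Proof. reflexivity. Qed.

Lemma CR_plus (u v : C) : @plus C_R_NormedModule u v = Cplus u v.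
Proof. reflexivity. Qed.

Definition cd (G : C -> C) (w l : C) : Prop :=
  forall eps, 0 < eps -> exists d, 0 < d /\ forall u, Cmod (Cminus u w) < d ->
    Cmod (Cminus (Cminus (G u) (G w)) (Cmult l (Cminus u w))) <= eps * Cmod (Cminus u w).

Lemma cd_isd G w l : cd G w l <-> is_derive (K := C_AbsRing) (V := C_NormedModule) G w l.
Proof.
  split.
  - intros H. apply eps_isd. intros eps He. destruct (H eps He) as [d [Hd H']].
    exists d. split; auto. intros y Hy. specialize (H' y Hy).
    replace (Cmult l (Cminus y w)) with (Cmult (Cminus y w) l) in H' by ring. exact H'.
  - intros H eps He. destruct (isd_eps _ _ _ H eps He) as [d [Hd H']].
    exists d. split; auto. intros y Hy. specialize (H' y Hy).
    replace (Cmult l (Cminus y w)) with (Cmult (Cminus y w) l) by ring. exact H'.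
Qed.

Definition Ci : C := (0, 1).

Definition ccont (g : C -> C) (x : C) : Prop :=
  forall eps, 0 < eps -> exists d, 0 < d /\ forall u, Cmod (Cminus u x) < d ->
    Cmod (Cminus (g u) (g x)) < eps.

Lemma Cmod_pair (x y : R) : Cmod (x, y) = sqrt (x * x + y * y).
Proof. unfold Cmod. simpl. f_equal. ring. Qed.

Lemma Cmod_hor (t x y : R) : Cmod (Cminus (t, y) (x, y)) = Rabs (t - x).
Proof.
  replace (Cminus (t, y) (x, y)) with (RtoC (t - x)).
  - apply Cmod_R.
  - unfold Cminus, Cplus, Copp, RtoC. simpl. f_equal; ring.
Qed.

Lemma hor_eq (t x y : R) : Cminus (t, y) (x, y) = RtoC (t - x).
Proof. unfold Cminus, Cplus, Copp, RtoC. simpl. f_equal; ring. Qed.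

Lemma ver_eq (t x y : R) : Cminus (x, t) (x, y) = Cmult Ci (RtoC (t - y)).
Proof. unfold Cminus, Cplus, Copp, RtoC, Cmult, Ci. simpl. f_equal; ring. Qed.

Lemma Cmod_Ci : Cmod Ci = 1.
Proof. unfold Ci. rewrite Cmod_pair. replace (0 * 0 + 1 * 1) with 1 by ring. apply sqrt_1. Qed.

Lemma Cmod_ver (t x y : R) : Cmod (Cminus (x, t) (x, y)) = Rabs (t - y).
Proof. rewrite ver_eq, Cmod_mult, Cmod_Ci, Cmod_R. ring. Qed.

Lemma cd_ccont G w l : cd G w l -> ccont G w.
Proof.
  intros H eps He. destruct (H 1 Rlt_0_1) as [d [Hd H']].
  set (d' := Rmin d (eps / (Cmod l + 2))).
  assert (Hl := Cmod_ge_0 l).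
  assert (Hd' : 0 < d') by (apply Rmin_pos; auto; apply Rdiv_lt_0_compat; lra).
  exists d'. split; auto. intros u Hu.
  assert (Hu1 : Cmod (Cminus u w) < d) by (eapply Rlt_le_trans; [apply Hu| apply Rmin_l]).
  assert (Hu2 : Cmod (Cminus u w) < eps / (Cmod l + 2)) by (eapply Rlt_le_trans; [apply Hu| apply Rmin_r]).
  specialize (H' u Hu1).
  replace (Cminus (G u) (G w)) with
    (Cplus (Cminus (Cminus (G u) (G w)) (Cmult l (Cminus u w))) (Cmult l (Cminus u w))) by ring.
  eapply Rle_lt_trans; [apply Cmod_triangle|]. rewrite Cmod_mult.
  assert (Hm := Cmod_ge_0 (Cminus u w)).
  assert (Cmod (Cminus u w) * (Cmod l + 2) < eps).
  { apply (Rmult_lt_reg_r (/ (Cmod l + 2))). apply Rinv_0_lt_compat; lra.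
    rewrite Rmult_assoc, Rinv_r by lra. unfold Rdiv in Hu2. lra. }
  nra.
Qed.

Lemma path_h G x y l : cd G (x, y) l ->
  is_derive (K := R_AbsRing) (V := C_R_NormedModule) (fun t => G (t, y)) x l.
Proof.
  intros H. apply eps_isd. intros eps He. destruct (H eps He) as [d [Hd H']].
  exists d. split; auto. intros t Ht.
  change (abs (minus t x)) with (Rabs (t - x)) in *.
  change (norm (minus (minus (G (t,y)) (G (x,y))) (scal (minus t x) l))) with
    (@norm R_AbsRing C_R_NormedModule (Cminus (Cminus (G (t,y)) (G (x,y))) (@scal R_Ring C_R_ModuleSpace (t - x) l))).
  rewrite CR_norm, CR_scal.
  rewrite <- Cmod_hor with (y := y). rewrite <- Cmod_hor with (y := y) in Ht.
  rewrite <- hor_eq with (y := y).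
  rewrite (Cmult_comm _ l).
  apply H'. auto.
Qed.

Lemma path_v G x y l : cd G (x, y) l ->
  is_derive (K := R_AbsRing) (V := C_R_NormedModule) (fun t => G (x, t)) y (Cmult Ci l).
Proof.
  intros H. apply eps_isd. intros eps He. destruct (H eps He) as [d [Hd H']].
  exists d. split; auto. intros t Ht.
  change (abs (minus t y)) with (Rabs (t - y)) in *.
  change (norm (minus (minus (G (x,t)) (G (x,y))) (scal (minus t y) (Cmult Ci l)))) with
    (@norm R_AbsRing C_R_NormedModule (Cminus (Cminus (G (x,t)) (G (x,y))) (@scal R_Ring C_R_ModuleSpace (t - y) (Cmult Ci l)))).
  rewrite CR_norm, CR_scal.
  rewrite <- Cmod_ver with (x := x). rewrite <- Cmod_ver with (x := x) in Ht.
  replace (Cmult (RtoC (t - y)) (Cmult Ci l)) with (Cmult l (Cminus (x, t) (x, y)))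
    by (rewrite ver_eq; ring).
  apply H'. auto.
Qed.

Lemma ball_CR (u v : C) e : Cmod (Cminus u v) < e -> @ball C_R_NormedModule v e u.
Proof.
  intros H. unfold ball. simpl. unfold prod_ball. simpl. unfold ball; simpl. unfold AbsRing_ball. simpl.
  unfold abs, minus, plus, opp; simpl.
  assert (H1 := Rmax_Cmod (Cminus u v)). 
  assert (E1 : fst (Cminus u v) = fst u + - fst v) by reflexivity.
  assert (E2 : snd (Cminus u v) = snd u + - snd v) by reflexivity.
  rewrite E1, E2 in H1.
  split; eapply Rle_lt_trans; try apply H; eapply Rle_trans; try apply H1;
    [apply Rmax_l | apply Rmax_r].
Qed.

Lemma cont_h g x y : ccont g (x, y) ->
  @continuous R_UniformSpace C_R_NormedModule (fun t => g (t, y)) x.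
Proof.
  intros H. apply filterlim_locally. intros [eps He]. simpl.
  destruct (H eps He) as [d [Hd H']]. exists (mkposreal d Hd). intros t Ht.
  apply ball_CR. apply H'. rewrite Cmod_hor. exact Ht.
Qed.

Lemma cont_v g x y : ccont g (x, y) ->
  @continuous R_UniformSpace C_R_NormedModule (fun t => g (x, t)) y.
Proof.
  intros H. apply filterlim_locally. intros [eps He]. simpl.
  destruct (H eps He) as [d [Hd H']]. exists (mkposreal d Hd). intros t Ht.
  apply ball_CR. apply H'. rewrite Cmod_ver. exact Ht.
Qed.

Lemma ccont_cmul c g x : ccont g x -> ccont (fun u => Cmult c (g u)) x.
Proof.
  intros H eps He. destruct (H (eps / (Cmod c + 1))) as [d [Hd H']].
  { apply Rdiv_lt_0_compat; auto. assert (H0 := Cmod_ge_0 c). lra. }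
  exists d. split; auto. intros u Hu. specialize (H' u Hu).
  replace (Cminus (Cmult c (g u)) (Cmult c (g x))) with (Cmult c (Cminus (g u) (g x))) by ring.
  rewrite Cmod_mult. assert (H0 := Cmod_ge_0 c). assert (H1 := Cmod_ge_0 (Cminus (g u) (g x))).
  assert (Cmod (Cminus (g u) (g x)) * (Cmod c + 1) < eps).
  { apply (Rmult_lt_reg_r (/ (Cmod c + 1))). apply Rinv_0_lt_compat; lra.
    rewrite Rmult_assoc, Rinv_r by lra. unfold Rdiv in H'. lra. }
  nra.
Qed.

Definition CInt (g : R -> C) (a b : R) : C := @RInt C_R_CompleteNormedModule g a b.
Definition cexi (g : R -> C) (a b : R) : Prop := @ex_RInt C_R_NormedModule g a b.

Lemma cexi_h g a b y : a <= b -> (forall t, a <= t <= b -> ccont g (t, y)) ->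
  cexi (fun t => g (t, y)) a b.
Proof.
  intros Hab H. apply (@ex_RInt_continuous C_R_CompleteNormedModule).
  intros z Hz. rewrite Rmin_left, Rmax_right in Hz by auto. apply cont_h. auto.
Qed.

Lemma cexi_v g x c d : c <= d -> (forall t, c <= t <= d -> ccont g (x, t)) ->
  cexi (fun t => g (x, t)) c d.
Proof.
  intros Hab H. apply (@ex_RInt_continuous C_R_CompleteNormedModule).
  intros z Hz. rewrite Rmin_left, Rmax_right in Hz by auto. apply cont_v. auto.
Qed.

Lemma CInt_plus g h a b : cexi g a b -> cexi h a b ->
  CInt (fun t => Cplus (g t) (h t)) a b = Cplus (CInt g a b) (CInt h a b).
Proof. intros H1 H2. exact (@RInt_plus C_R_CompleteNormedModule g h a b H1 H2). Qed.

Lemma CInt_minus g h a b : cexi g a b -> cexi h a b ->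
  CInt (fun t => Cminus (g t) (h t)) a b = Cminus (CInt g a b) (CInt h a b).
Proof. intros H1 H2. exact (@RInt_minus C_R_CompleteNormedModule g h a b H1 H2). Qed.

Lemma CInt_Chasles g a b c : cexi g a b -> cexi g b c ->
  Cplus (CInt g a b) (CInt g b c) = CInt g a c.
Proof. intros H1 H2. exact (@RInt_Chasles C_R_CompleteNormedModule g a b c H1 H2). Qed.

Lemma cexi_Chasles_1 g a b c : a <= b <= c -> cexi g a c -> cexi g a b.
Proof. intros H1 H2. exact (@ex_RInt_Chasles_1 C_R_CompleteNormedModule g a b c H1 H2). Qed.

Lemma cexi_Chasles_2 g a b c : a <= b <= c -> cexi g a c -> cexi g b c.
Proof. intros H1 H2. exact (@ex_RInt_Chasles_2 C_R_CompleteNormedModule g a b c H1 H2). Qed.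

Lemma CInt_ext g h a b : (forall t, Rmin a b < t < Rmax a b -> g t = h t) -> CInt g a b = CInt h a b.
Proof. intros H. exact (@RInt_ext C_R_CompleteNormedModule g h a b H). Qed.

Lemma CInt_is g a b : cexi g a b -> @is_RInt C_R_NormedModule g a b (CInt g a b).
Proof. intros H. exact (@RInt_correct C_R_CompleteNormedModule g a b H). Qed.

Lemma CInt_norm g a b B : a <= b -> cexi g a b ->
  (forall t, a <= t <= b -> Cmod (g t) <= B) -> Cmod (CInt g a b) <= (b - a) * B.
Proof.
  intros Hab He H. rewrite <- CR_norm.
  apply (@norm_RInt_le C_R_NormedModule g (fun _ => B) a b (CInt g a b) ((b - a) * B)); auto.
  - intros t Ht. rewrite CR_norm. auto.
  - apply CInt_is; auto.
  - assert (K := @is_RInt_const R_NormedModule a b B). exact K.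
Qed.

Lemma CInt_fst g a b : cexi g a b -> fst (CInt g a b) = RInt (fun t => fst (g t)) a b.
Proof.
  intros H. symmetry. apply is_RInt_unique.
  apply (@is_RInt_fct_extend_fst R_NormedModule R_NormedModule g a b). apply CInt_is; auto.
Qed.

Lemma CInt_snd g a b : cexi g a b -> snd (CInt g a b) = RInt (fun t => snd (g t)) a b.
Proof.
  intros H. symmetry. apply is_RInt_unique.
  apply (@is_RInt_fct_extend_snd R_NormedModule R_NormedModule g a b). apply CInt_is; auto.
Qed.

Lemma cexi_fst g a b : cexi g a b -> ex_RInt (fun t => fst (g t)) a b.
Proof. intros H. eexists. apply (@is_RInt_fct_extend_fst R_NormedModule R_NormedModule g a b). apply CInt_is; auto. Qed.

Lemma cexi_snd g a b : cexi g a b -> ex_RInt (fun t => snd (g t)) a b.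
Proof. intros H. eexists. apply (@is_RInt_fct_extend_snd R_NormedModule R_NormedModule g a b). apply CInt_is; auto. Qed.

Lemma is_RInt_cmul c g a b : cexi g a b ->
  @is_RInt C_R_NormedModule (fun t => Cmult c (g t)) a b (Cmult c (CInt g a b)).
Proof.
  intros H.
  destruct c as [c1 c2].
  assert (H1 := RInt_correct _ _ _ (cexi_fst g a b H)).
  assert (H2 := RInt_correct _ _ _ (cexi_snd g a b H)).
  rewrite (surjective_pairing (CInt g a b)).
  rewrite (CInt_fst g a b H). rewrite (CInt_snd g a b H).
  set (I1 := RInt (fun t => fst (g t)) a b) in *.
  set (I2 := RInt (fun t => snd (g t)) a b) in *.
  replace (Cmult (c1, c2) (I1, I2)) with ((c1 * I1 - c2 * I2, c1 * I2 + c2 * I1)%R : C) by reflexivity.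
  apply (@is_RInt_fct_extend_pair R_NormedModule R_NormedModule).
  - simpl. apply (is_RInt_ext (fun t => (c1 * fst (g t) - c2 * snd (g t))%R)).
    { intros; reflexivity. }
    apply (@is_RInt_minus R_NormedModule); apply (@is_RInt_scal R_NormedModule); auto.
  - simpl. apply (is_RInt_ext (fun t => (c1 * snd (g t) + c2 * fst (g t))%R)).
    { intros; reflexivity. }
    apply (@is_RInt_plus R_NormedModule); apply (@is_RInt_scal R_NormedModule); auto.
Qed.

Lemma CInt_cmul c g a b : cexi g a b ->
  CInt (fun t => Cmult c (g t)) a b = Cmult c (CInt g a b).
Proof.
  intros H. unfold CInt at 1. apply (@is_RInt_unique C_R_CompleteNormedModule).
  apply is_RInt_cmul; auto.
Qed.

Lemma cexi_cmul c g a b : cexi g a b -> cexi (fun t => Cmult c (g t)) a b.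
Proof. intros H. eexists. apply is_RInt_cmul; auto. Qed.

Lemma CInt_FTC_h G g a b y : a <= b ->
  (forall t, a <= t <= b -> cd G (t, y) (g (t, y))) ->
  (forall t, a <= t <= b -> ccont g (t, y)) ->
  CInt (fun t => g (t, y)) a b = Cminus (G (b, y)) (G (a, y)).
Proof.
  intros Hab HD HC. apply (@is_RInt_unique C_R_CompleteNormedModule).
  apply (@is_RInt_derive C_R_CompleteNormedModule (fun t => G (t, y)) (fun t => g (t, y))).
  - intros t Ht. rewrite Rmin_left, Rmax_right in Ht by auto. apply path_h. auto.
  - intros t Ht. rewrite Rmin_left, Rmax_right in Ht by auto. apply cont_h. auto.
Qed.

Lemma CInt_FTC_v G g x c d : c <= d ->
  (forall t, c <= t <= d -> cd G (x, t) (g (x, t))) ->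
  (forall t, c <= t <= d -> ccont g (x, t)) ->
  CInt (fun t => Cmult Ci (g (x, t))) c d = Cminus (G (x, d)) (G (x, c)).
Proof.
  intros Hab HD HC. apply (@is_RInt_unique C_R_CompleteNormedModule).
  apply (@is_RInt_derive C_R_CompleteNormedModule (fun t => G (x, t)) (fun t => Cmult Ci (g (x, t)))).
  - intros t Ht. rewrite Rmin_left, Rmax_right in Ht by auto. apply path_v. auto.
  - intros t Ht. rewrite Rmin_left, Rmax_right in Ht by auto.
    apply (cont_v (fun u => Cmult Ci (g u))). apply ccont_cmul. auto.
Qed.

Lemma isd_conv (f : C -> C) x l : @is_derive C_AbsRing (AbsRing_NormedModule C_AbsRing) f x l <-> @is_derive C_AbsRing C_NormedModule f x l.
Proof.
intros. unfold is_derive, filterdiff. split; intros [H1 H2]; split.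
all: try (destruct H1 as [a b [M HM]]; split; auto; exists M; exact HM).
all: intros y Hy; specialize (H2 y Hy); exact H2.
Qed.

Lemma cd_plus F G w l1 l2 : cd F w l1 -> cd G w l2 -> cd (fun u => Cplus (F u) (G u)) w (Cplus l1 l2).
Proof. rewrite !cd_isd. intros H1 H2. apply (is_derive_plus (K:=C_AbsRing) (V:=C_NormedModule) F G w l1 l2 H1 H2). Qed.

Lemma cd_minus F G w l1 l2 : cd F w l1 -> cd G w l2 -> cd (fun u => Cminus (F u) (G u)) w (Cminus l1 l2).
Proof. rewrite !cd_isd. intros H1 H2. apply (is_derive_minus (K:=C_AbsRing) (V:=C_NormedModule) F G w l1 l2 H1 H2). Qed.

Lemma cd_const (c : C) w : cd (fun _ => c) w (RtoC 0).
Proof. rewrite cd_isd. apply (is_derive_const (K:=C_AbsRing) (V:=C_NormedModule) c w). Qed.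

Lemma cd_id w : cd (fun u => u) w (RtoC 1).
Proof. rewrite cd_isd. apply isd_conv. apply (is_derive_id (K:=C_AbsRing) w). Qed.

Lemma cd_mult F G w l1 l2 : cd F w l1 -> cd G w l2 ->
  cd (fun u => Cmult (F u) (G u)) w (Cplus (Cmult l1 (G w)) (Cmult (F w) l2)).
Proof.
  rewrite !cd_isd. intros H1 H2. apply isd_conv in H1. apply isd_conv in H2. apply isd_conv.
  exact (is_derive_mult (K := C_AbsRing) F G w l1 l2 H1 H2 (fun a b => Cmult_comm a b)).
Qed.

Lemma cd_ext_loc F G w l : (exists d0, 0 < d0 /\ forall u, Cmod (Cminus u w) < d0 -> F u = G u) ->
  cd F w l -> cd G w l.
Proof.
  intros [d0 [Hd0 HE]] H eps He. destruct (H eps He) as [d [Hd H']].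
  exists (Rmin d d0). split; [apply Rmin_pos; auto|]. intros u Hu.
  assert (Hu1 : Cmod (Cminus u w) < d) by (eapply Rlt_le_trans; [apply Hu|apply Rmin_l]).
  assert (Hu2 : Cmod (Cminus u w) < d0) by (eapply Rlt_le_trans; [apply Hu|apply Rmin_r]).
  rewrite <- (HE u Hu2), <- (HE w). apply H'; auto.
  replace (Cminus w w) with (RtoC 0) by ring. rewrite Cmod_0. auto.
Qed.

Lemma cd_ext F G w l : (forall u, F u = G u) -> cd F w l -> cd G w l.
Proof. intros E. apply cd_ext_loc. exists 1. split; [lra|]. auto. Qed.

Lemma cd_l_ext F w l1 l2 : l1 = l2 -> cd F w l1 -> cd F w l2.
Proof. intros ->; auto. Qed.

Lemma Cmod_pos_ne (x : C) : x <> RtoC 0 -> 0 < Cmod x.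
Proof.
  intros H. destruct (Rle_lt_or_eq_dec _ _ (Cmod_ge_0 x)) as [h|h]; auto.
  exfalso. apply H. apply Cmod_eq_0. auto.
Qed.

Lemma Cmod_rev_tri (u w z : C) : Cmod (Cminus w z) - Cmod (Cminus u w) <= Cmod (Cminus u z).
Proof.
  assert (H := Cmod_triangle (Cminus u z) (Cminus w u)).
  replace (Cplus (Cminus u z) (Cminus w u)) with (Cminus w z) in H by ring.
  replace (Cminus w u) with (Copp (Cminus u w)) in H by ring. rewrite Cmod_opp in H. lra.
Qed.

Lemma cd_inv z w : w <> z ->
  cd (fun u => Cinv (Cminus u z)) w (Copp (Cinv (Cmult (Cminus w z) (Cminus w z)))).
Proof.
  intros Hwz eps He.
  assert (Hr : 0 < Cmod (Cminus w z)).
  { apply Cmod_pos_ne. intros H. apply Hwz. replace w with (Cplus (Cminus w z) z) by ring. rewrite H. ring. }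
  set (r := Cmod (Cminus w z)) in *.
  exists (Rmin (r / 2) (eps * (r * r * r) / 2)). split.
  { assert (0 < r * r * r) by (apply Rmult_lt_0_compat; [apply Rmult_lt_0_compat|]; auto).
    apply Rmin_pos; apply Rdiv_lt_0_compat; try lra. apply Rmult_lt_0_compat; auto. }
  intros u Hu.
  assert (Hu1 : Cmod (Cminus u w) < r / 2) by (eapply Rlt_le_trans; [apply Hu|apply Rmin_l]).
  assert (Hu2 : Cmod (Cminus u w) < eps * (r * r * r) / 2) by (eapply Rlt_le_trans; [apply Hu|apply Rmin_r]).
  assert (Huz : r / 2 <= Cmod (Cminus u z)) by (generalize (Cmod_rev_tri u w z); fold r; lra).
  assert (Huz0 : Cminus u z <> RtoC 0).
  { intros H. rewrite H, Cmod_0 in Huz. lra. }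
  assert (Hwz0 : Cminus w z <> RtoC 0).
  { intros H. unfold r in Hr. rewrite H, Cmod_0 in Hr. lra. }
  replace (Cminus (Cminus (Cinv (Cminus u z)) (Cinv (Cminus w z)))
            (Cmult (Copp (Cinv (Cmult (Cminus w z) (Cminus w z)))) (Cminus u w)))
    with (Cmult (Cmult (Cminus u w) (Cminus u w))
                (Cinv (Cmult (Cminus u z) (Cmult (Cminus w z) (Cminus w z))))).
  2:{ field. auto. }
  rewrite !Cmod_mult, Cmod_inv.
  2:{ repeat apply Cmult_neq_0; auto. }
  rewrite !Cmod_mult. fold r.
  set (m := Cmod (Cminus u w)) in *. assert (Hm : 0 <= m) by apply Cmod_ge_0.
  set (q := Cmod (Cminus u z)) in *.
  assert (Hq : 0 < q) by lra.
  assert (0 < q * (r * r)) by (apply Rmult_lt_0_compat; nra).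
  apply (Rmult_le_reg_r (q * (r * r))); auto.
  rewrite Rmult_assoc, Rinv_l by lra. rewrite Rmult_1_r.
  assert (m * m <= m * (eps * (r * r * r) / 2)) by (apply Rmult_le_compat_l; lra).
  assert (eps * (r * r * r) / 2 <= eps * (q * (r * r))).
  { unfold Rdiv. assert (r * r * r * / 2 <= q * (r * r)) by nra. nra. }
  nra.
Qed.

Lemma cd_pow F w l n : cd F w l ->
  cd (fun u => Defs.Cpow (F u) (S n)) w (Cmult (RtoC (INR (S n))) (Cmult (Defs.Cpow (F w) n) l)).
Proof.
  intros H. induction n as [|n IH].
  - eapply cd_ext; [|eapply cd_l_ext; [|apply H]].
    { intros u. change (Defs.Cpow (F u) 1) with (Cmult (RtoC 1) (F u)). ring. }
    change (Defs.Cpow (F w) 0) with (RtoC 1). change (INR 1) with 1%R. ring.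
  - eapply cd_ext; [|eapply cd_l_ext; [|apply (cd_mult _ _ _ _ _ IH H)]].
    { intros u. reflexivity. }
    change (Defs.Cpow (F w) (S n)) with (Cmult (Defs.Cpow (F w) n) (F w)).
    rewrite (S_INR (S n)), RtoC_plus. ring.
Qed.

Definition hb (g : C -> C) a b y : C := CInt (fun t => g (t, y)) a b.
Definition hv (g : C -> C) x c d : C := CInt (fun t => g (x, t)) c d.
Definition RI (g : C -> C) a b c d : C :=
  Cminus (Cminus (Cplus (hb g a b c) (Cmult Ci (hv g b c d))) (hb g a b d)) (Cmult Ci (hv g a c d)).

Definition Hrect (P : C -> Prop) a b c d := forall x y, a <= x <= b -> c <= y <= d -> P (x, y).
Definition Hedge (P : C -> Prop) a b c d :=
  (forall x, a <= x <= b -> P (x, c) /\ P (x, d)) /\ (forall y, c <= y <= d -> P (a, y) /\ P (b, y)).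

Lemma Hrect_edge P a b c d : a <= b -> c <= d -> Hrect P a b c d -> Hedge P a b c d.
Proof. intros Hab Hcd H. split; intros; split; apply H; lra. Qed.

Lemma RI_cut_v g a m b c d : a <= m <= b -> c <= d -> Hrect (ccont g) a b c d ->
  RI g a b c d = Cplus (RI g a m c d) (RI g m b c d).
Proof.
  intros Hm Hcd H. unfold RI, hb.
  assert (E : forall y, c <= y <= d ->
     CInt (fun t => g (t, y)) a b = Cplus (CInt (fun t => g (t, y)) a m) (CInt (fun t => g (t, y)) m b)).
  { intros y Hy. symmetry. apply CInt_Chasles.
    - apply cexi_h; [lra|]. intros; apply H; lra.
    - apply cexi_h; [lra|]. intros; apply H; lra. }
  rewrite (E c), (E d) by lra. ring.
Qed.

Lemma RI_cut_h g a b c m d : a <= b -> c <= m <= d -> Hrect (ccont g) a b c d ->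
  RI g a b c d = Cplus (RI g a b c m) (RI g a b m d).
Proof.
  intros Hab Hm H. unfold RI, hv.
  assert (E : forall x, a <= x <= b ->
     CInt (fun t => g (x, t)) c d = Cplus (CInt (fun t => g (x, t)) c m) (CInt (fun t => g (x, t)) m d)).
  { intros x Hx. symmetry. apply CInt_Chasles.
    - apply cexi_v; [lra|]. intros; apply H; lra.
    - apply cexi_v; [lra|]. intros; apply H; lra. }
  rewrite (E a), (E b) by lra. ring.
Qed.

Lemma RI_bound g a b c d B : a <= b -> c <= d -> Hedge (ccont g) a b c d ->
  Hedge (fun u => Cmod (g u) <= B) a b c d ->
  Cmod (RI g a b c d) <= 2 * ((b - a) + (d - c)) * B.
Proof.
  intros Hab Hcd [Hc1 Hc2] [Hb1 Hb2]. unfold RI, hb, hv.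
  assert (B1 : Cmod (CInt (fun t => g (t, c)) a b) <= (b - a) * B).
  { apply CInt_norm; auto. apply cexi_h; auto; intros; apply Hc1; auto.
    intros; apply Hb1; auto. }
  assert (B2 : Cmod (CInt (fun t => g (t, d)) a b) <= (b - a) * B).
  { apply CInt_norm; auto. apply cexi_h; auto; intros; apply Hc1; auto.
    intros; apply Hb1; auto. }
  assert (B3 : Cmod (CInt (fun t => g (a, t)) c d) <= (d - c) * B).
  { apply CInt_norm; auto. apply cexi_v; auto; intros; apply Hc2; auto.
    intros; apply Hb2; auto. }
  assert (B4 : Cmod (CInt (fun t => g (b, t)) c d) <= (d - c) * B).
  { apply CInt_norm; auto. apply cexi_v; auto; intros; apply Hc2; auto.
    intros; apply Hb2; auto. }
  unfold Cminus. 
  eapply Rle_trans; [apply Cmod_triangle|]. rewrite Cmod_opp, Cmod_mult, Cmod_Ci.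
  eapply Rle_trans; [apply Rplus_le_compat_r; apply Cmod_triangle|]. rewrite Cmod_opp.
  eapply Rle_trans; [apply Rplus_le_compat_r; apply Rplus_le_compat_r; apply Cmod_triangle|].
  rewrite Cmod_mult, Cmod_Ci. lra.
Qed.

Lemma RI_FTC G g a b c d : a <= b -> c <= d ->
  Hedge (fun u => cd G u (g u) /\ ccont g u) a b c d -> RI g a b c d = RtoC 0.
Proof.
  intros Hab Hcd [H1 H2]. unfold RI, hb, hv.
  rewrite !(CInt_FTC_h G g) by (auto; intros; first [apply H1 | apply H2]; auto).
  rewrite <- !CInt_cmul.
  2,3: apply cexi_v; auto; intros; apply H2; auto.
  rewrite !(CInt_FTC_v G g) by (auto; intros; first [apply H1 | apply H2]; auto).
  ring.
Qed.

Lemma RI_minus g h a b c d : a <= b -> c <= d ->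
  Hedge (ccont g) a b c d -> Hedge (ccont h) a b c d ->
  RI (fun u => Cminus (g u) (h u)) a b c d = Cminus (RI g a b c d) (RI h a b c d).
Proof.
  intros Hab Hcd [G1 G2] [H1 H2]. unfold RI, hb, hv.
  rewrite !(CInt_minus (fun t => g (t, _)) (fun t => h (t, _)))
    by (apply cexi_h; auto; intros; first [apply G1|apply H1]; auto).
  rewrite !(CInt_minus (fun t => g (_, t)) (fun t => h (_, t)))
    by (apply cexi_v; auto; intros; first [apply G2|apply H2]; auto).
  ring.
Qed.

Lemma ccont_minus g h x : ccont g x -> ccont h x -> ccont (fun u => Cminus (g u) (h u)) x.
Proof.
  intros H1 H2 eps He. destruct (H1 (eps/2)) as [d1 [Hd1 K1]]; [lra|].
  destruct (H2 (eps/2)) as [d2 [Hd2 K2]]; [lra|].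
  exists (Rmin d1 d2). split; [apply Rmin_pos; auto|]. intros u Hu.
  assert (Hu1 : Cmod (Cminus u x) < d1) by (eapply Rlt_le_trans; [apply Hu|apply Rmin_l]).
  assert (Hu2 : Cmod (Cminus u x) < d2) by (eapply Rlt_le_trans; [apply Hu|apply Rmin_r]).
  specialize (K1 u Hu1). specialize (K2 u Hu2).
  replace (Cminus (Cminus (g u) (h u)) (Cminus (g x) (h x)))
    with (Cplus (Cminus (g u) (g x)) (Copp (Cminus (h u) (h x)))) by ring.
  eapply Rle_lt_trans; [apply Cmod_triangle|]. rewrite Cmod_opp. lra.
Qed.

Lemma Cmod_le_sum (x : C) : Cmod x <= Rabs (fst x) + Rabs (snd x).
Proof.
  unfold Cmod. destruct x as [p q]. simpl.
  assert (E1 : p * (p * 1) = Rabs p * Rabs p) by (rewrite <- Rabs_mult, Rabs_pos_eq; nra).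
  assert (E2 : q * (q * 1) = Rabs q * Rabs q) by (rewrite <- Rabs_mult, Rabs_pos_eq; nra).
  rewrite E1, E2.
  rewrite <- (sqrt_square (Rabs p + Rabs q)) by (generalize (Rabs_pos p) (Rabs_pos q); lra).
  apply sqrt_le_1_alt. generalize (Rabs_pos p) (Rabs_pos q). nra.
Qed.

Record rect := mkR { ra : R; rb : R; rc : R; rd : R }.
Definition RIr g r := RI g (ra r) (rb r) (rc r) (rd r).
Definition wf r := ra r <= rb r /\ rc r <= rd r.
Definition sub r' r := ra r <= ra r' /\ rb r' <= rb r /\ rc r <= rc r' /\ rd r' <= rd r.
Definition half r' r := rb r' - ra r' = (rb r - ra r) / 2 /\ rd r' - rc r' = (rd r - rc r) / 2.
Definition HR (P : C -> Prop) r := Hrect P (ra r) (rb r) (rc r) (rd r).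

Definition q1 r := mkR (ra r) ((ra r + rb r) / 2) (rc r) ((rc r + rd r) / 2).
Definition q2 r := mkR ((ra r + rb r) / 2) (rb r) (rc r) ((rc r + rd r) / 2).
Definition q3 r := mkR (ra r) ((ra r + rb r) / 2) ((rc r + rd r) / 2) (rd r).
Definition q4 r := mkR ((ra r + rb r) / 2) (rb r) ((rc r + rd r) / 2) (rd r).

Lemma HR_sub P r r' : sub r' r -> HR P r -> HR P r'.
Proof. intros [h1 [h2 [h3 h4]]] H x y Hx Hy. apply H; lra. Qed.

Lemma sub_trans r1 r2 r3 : sub r1 r2 -> sub r2 r3 -> sub r1 r3.
Proof. unfold sub. intros; lra. Qed.

Lemma sub_refl r : sub r r.
Proof. unfold sub; lra. Qed.

Lemma RI_quarters g r : wf r -> HR (ccont g) r ->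
  RIr g r = Cplus (Cplus (RIr g (q1 r)) (RIr g (q2 r))) (Cplus (RIr g (q3 r)) (RIr g (q4 r))).
Proof.
  intros [Hab Hcd] H. unfold RIr, q1, q2, q3, q4; simpl.
  destruct r as [a b c d]. simpl in *. unfold HR in H; simpl in H.
  rewrite (RI_cut_v g a ((a + b) / 2) b c d) by (auto; lra).
  rewrite (RI_cut_h g a ((a + b) / 2) c ((c + d) / 2) d) by (try lra; intros x y Hx Hy; apply H; lra).
  rewrite (RI_cut_h g ((a + b) / 2) b c ((c + d) / 2) d) by (try lra; intros x y Hx Hy; apply H; lra).
  ring.
Qed.

Definition choose g r :=
  if Rle_dec (Cmod (RIr g r) / 4) (Cmod (RIr g (q1 r))) then q1 r else
  if Rle_dec (Cmod (RIr g r) / 4) (Cmod (RIr g (q2 r))) then q2 r else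
  if Rle_dec (Cmod (RIr g r) / 4) (Cmod (RIr g (q3 r))) then q3 r else q4 r.

Lemma choose_prop g r : wf r -> HR (ccont g) r ->
  Cmod (RIr g r) / 4 <= Cmod (RIr g (choose g r)) /\ wf (choose g r) /\
  sub (choose g r) r /\ half (choose g r) r.
Proof.
  intros Hw H. assert (Hw' := Hw). destruct Hw' as [Hab Hcd].
  assert (G : forall q, (q = q1 r \/ q = q2 r \/ q = q3 r \/ q = q4 r) ->
     wf q /\ sub q r /\ half q r).
  { intros q Hq. destruct r as [a b c d]; simpl in *.
    destruct Hq as [Hq|[Hq|[Hq|Hq]]]; subst q; unfold wf, sub, half, q1, q2, q3, q4; simpl; lra. }
  unfold choose.
  destruct (Rle_dec _ (Cmod (RIr g (q1 r)))) as [h1|h1].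
  { split; [auto| apply G; auto]. }
  destruct (Rle_dec _ (Cmod (RIr g (q2 r)))) as [h2|h2].
  { split; [auto| apply G; auto]. }
  destruct (Rle_dec _ (Cmod (RIr g (q3 r)))) as [h3|h3].
  { split; [auto| apply G; auto]. }
  split; [|apply G; auto].
  rewrite (RI_quarters g r Hw H) at 1.
  assert (T := Cmod_triangle (Cplus (RIr g (q1 r)) (RIr g (q2 r))) (Cplus (RIr g (q3 r)) (RIr g (q4 r)))).
  assert (T1 := Cmod_triangle (RIr g (q1 r)) (RIr g (q2 r))).
  assert (T2 := Cmod_triangle (RIr g (q3 r)) (RIr g (q4 r))).
  rewrite (RI_quarters g r Hw H) in h1, h2, h3.
  lra.
Qed.

Definition gseq g r0 n := Nat.iter n (choose g) r0.

Lemma gseq_prop g r0 : wf r0 -> HR (ccont g) r0 -> forall n,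
  wf (gseq g r0 n) /\ sub (gseq g r0 n) r0 /\
  Cmod (RIr g r0) * ((/ 2) ^ n * (/ 2) ^ n) <= Cmod (RIr g (gseq g r0 n)) /\
  rb (gseq g r0 n) - ra (gseq g r0 n) = (rb r0 - ra r0) * (/ 2) ^ n /\
  rd (gseq g r0 n) - rc (gseq g r0 n) = (rd r0 - rc r0) * (/ 2) ^ n.
Proof.
  intros Hw H n. induction n as [|n [IH1 [IH2 [IH3 [IH4 IH5]]]]].
  - simpl. split; auto. split; [apply sub_refl|]. lra.
  - change (gseq g r0 (S n)) with (choose g (gseq g r0 n)).
    destruct (choose_prop g (gseq g r0 n) IH1 (HR_sub _ _ _ IH2 H)) as [C1 [C2 [C3 [C4 C5]]]].
    split; auto. split; [eapply sub_trans; eauto|]. simpl pow.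
    split; [|split].
    + assert (0 <= (/ 2) ^ n) by (apply pow_le; lra).
      eapply Rle_trans; [|apply C1]. nra.
    + rewrite C4, IH4. field.
    + rewrite C5, IH5. field.
Qed.

Lemma gseq_nested g r0 : wf r0 -> HR (ccont g) r0 -> forall n k, (n <= k)%nat ->
  sub (gseq g r0 k) (gseq g r0 n).
Proof.
  intros Hw H n k Hnk. induction Hnk.
  - apply sub_refl.
  - eapply sub_trans; [|apply IHHnk].
    change (gseq g r0 (S m)) with (choose g (gseq g r0 m)).
    destruct (gseq_prop g r0 Hw H m) as [W [Sb _]].
    apply (choose_prop g (gseq g r0 m) W (HR_sub _ _ _ Sb H)).
Qed.

Lemma nested_lim (A B : nat -> R) :
  (forall n, A n <= B n) -> (forall n k, (n <= k)%nat -> A n <= A k /\ B k <= B n) ->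
  exists x, forall n, A n <= x <= B n.
Proof.
  intros HAB Hmon.
  set (E := fun x => exists n, x = A n).
  assert (Hb : bound E).
  { exists (B 0%nat). intros x [n ->]. eapply Rle_trans; [apply HAB|]. apply Hmon; lia. }
  assert (Hne : exists x, E x) by (exists (A 0%nat); exists 0%nat; auto).
  destruct (completeness E Hb Hne) as [x [Hub Hlub]].
  exists x. intros n. split.
  - apply Hub. exists n; auto.
  - apply Hlub. intros y [k ->].
    destruct (Nat.le_ge_cases n k).
    + eapply Rle_trans; [apply HAB|]. apply Hmon; auto.
    + eapply Rle_trans; [apply Hmon; eauto|]. apply HAB.
Qed.

Lemma affine_RI (v l z0 : C) a b c d : a <= b -> c <= d ->
  RI (fun u => Cplus v (Cmult l (Cminus u z0))) a b c d = RtoC 0.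
Proof.
  intros Hab Hcd.
  apply (RI_FTC (fun u => Cplus (Cmult v u)
          (Cmult (Cmult l (RtoC (/ 2))) (Cmult (Cminus u z0) (Cminus u z0))))); auto.
  assert (HD : forall u, cd (fun u => Cplus (Cmult v u)
          (Cmult (Cmult l (RtoC (/ 2))) (Cmult (Cminus u z0) (Cminus u z0)))) u
          (Cplus v (Cmult l (Cminus u z0)))).
  { intros u.
    assert (K1 := cd_mult _ _ u _ _ (cd_const v u) (cd_id u)).
    assert (K2 := cd_minus _ _ u _ _ (cd_id u) (cd_const z0 u)).
    assert (K3 := cd_mult _ _ u _ _ K2 K2).
    assert (K4 := cd_mult _ _ u _ _ (cd_const (Cmult l (RtoC (/ 2))) u) K3).
    assert (K5 := cd_plus _ _ u _ _ K1 K4).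
    eapply cd_l_ext; [|exact K5].
    replace (Cplus v (Cmult l (Cminus u z0))) with
      (Cplus v (Cmult (Cmult l (Cmult (RtoC (/ 2)) (RtoC 2))) (Cminus u z0))).
    2:{ rewrite <- RtoC_mult, Rinv_l by lra. ring. }
    replace (RtoC 2) with (Cplus (RtoC 1) (RtoC 1)).
    2:{ rewrite <- RtoC_plus. f_equal; try ring. }
    ring. }
  assert (HC : forall u, ccont (fun u => Cplus v (Cmult l (Cminus u z0))) u).
  { intros u. eapply cd_ccont.
    exact (cd_plus _ _ u _ _ (cd_const v u) (cd_mult _ _ u _ _ (cd_const l u)
             (cd_minus _ _ u _ _ (cd_id u) (cd_const z0 u)))). }
  split; intros; split; split; auto.
Qed.

Lemma small_zero' r K : 0 <= K -> (forall eps, 0 < eps -> r <= K * eps) -> r <= 0.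
Proof.
  intros HK H. destruct (Rle_or_lt r 0) as [h|h]; auto.
  specialize (H (r / (2 * (K + 1)))).
  assert (0 < r / (2 * (K + 1))) by (apply Rdiv_lt_0_compat; lra).
  specialize (H H0).
  assert (K * (r / (2 * (K + 1))) < r).
  { unfold Rdiv. rewrite Rinv_mult.
    assert (0 < / (K + 1)) by (apply Rinv_0_lt_compat; lra).
    assert (K * / (K + 1) < 1).
    { apply (Rmult_lt_reg_r (K + 1)); [lra|]. rewrite Rmult_assoc, Rinv_l by lra. lra. }
    assert (0 < / 2) by lra.
    replace (K * (r * (/ 2 * / (K + 1)))) with ((K * / (K + 1)) * (r * / 2)) by ring.
    assert (K * / (K+1) >= 0) by (apply Rle_ge, Rmult_le_pos; lra).
    nra. }
  lra.
Qed.

Theorem goursat g a b c d : a <= b -> c <= d ->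
  Hrect (fun u => exists l, cd g u l) a b c d -> RI g a b c d = RtoC 0.
Proof.
  intros Hab Hcd Hd.
  set (r0 := mkR a b c d).
  assert (Hw : wf r0) by (unfold wf; simpl; lra).
  assert (Hc : HR (ccont g) r0).
  { intros x y Hx Hy. destruct (Hd x y Hx Hy) as [l Hl]. eapply cd_ccont; eauto. }
  assert (GP := gseq_prop g r0 Hw Hc).
  assert (GN := gseq_nested g r0 Hw Hc).
  destruct (nested_lim (fun n => ra (gseq g r0 n)) (fun n => rb (gseq g r0 n))) as [x0 Hx0].
  { intros n. apply GP. }
  { intros n k Hnk. destruct (GN n k Hnk) as [h1 [h2 _]]. auto. }
  destruct (nested_lim (fun n => rc (gseq g r0 n)) (fun n => rd (gseq g r0 n))) as [y0 Hy0].
  { intros n. apply GP. }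
  { intros n k Hnk. destruct (GN n k Hnk) as [_ [_ [h1 h2]]]. auto. }
  assert (Hx0r : a <= x0 <= b).
  { destruct (GP 0%nat) as [_ [[s1 [s2 _]] _]]. specialize (Hx0 0%nat). simpl in *. lra. }
  assert (Hy0r : c <= y0 <= d).
  { destruct (GP 0%nat) as [_ [[_ [_ [s3 s4]]] _]]. specialize (Hy0 0%nat). simpl in *. lra. }
  destruct (Hd x0 y0 Hx0r Hy0r) as [l Hl].
  set (z0 := (x0, y0) : C) in *.
  set (w := b - a + (d - c)).
  assert (Hw0 : 0 <= w) by (unfold w; lra).
  assert (Hmain : Cmod (RI g a b c d) <= 0).
  { apply (small_zero' _ (2 * (w * w))); [nra|].
    intros eps He. destruct (Hl eps He) as [del [Hdel Hl']].
    destruct (pow_lt_1_zero (/ 2) ltac:(rewrite Rabs_pos_eq; lra) (del / (w + 1)))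
      as [N HN]; [apply Rdiv_lt_0_compat; lra|].
    specialize (HN N (le_n N)). rewrite Rabs_pos_eq in HN by (apply pow_le; lra).
    set (p := (/ 2) ^ N) in *.
    assert (Hp : 0 < p) by (apply pow_lt; lra).
    destruct (GP N) as [[W1 W2] [Sb [Hbig [Hwid Hhei]]]].
    set (rN := gseq g r0 N) in *. simpl in Hwid, Hhei, Hbig. fold p in Hwid, Hhei, Hbig.
    assert (Hsmall : w * p < del).
    { apply (Rmult_lt_reg_r (/ (w + 1))). apply Rinv_0_lt_compat; lra.
      unfold Rdiv in HN. 
      assert (w * / (w + 1) <= 1).
      { apply (Rmult_le_reg_r (w + 1)); [lra|]. rewrite Rmult_assoc, Rinv_l by lra. lra. }
      assert (0 < / (w+1)) by (apply Rinv_0_lt_compat; lra).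
      nra. }
    assert (HcN : HR (ccont g) rN) by (eapply HR_sub; eauto).
    assert (Hin : forall x y, ra rN <= x <= rb rN -> rc rN <= y <= rd rN ->
              Cmod (Cminus (x, y) z0) <= w * p).
    { intros x y Hx Hy. eapply Rle_trans; [apply Cmod_le_sum|]. simpl.
      specialize (Hx0 N). specialize (Hy0 N). fold rN in Hx0, Hy0.
      unfold w. rewrite Rmult_plus_distr_r, <- Hwid, <- Hhei.
      apply Rplus_le_compat; apply Rabs_le; lra. }
    set (A := fun u => Cplus (g z0) (Cmult l (Cminus u z0))).
    assert (HcA : forall u, ccont A u).
    { intros u. eapply cd_ccont.
      exact (cd_plus _ _ u _ _ (cd_const (g z0) u) (cd_mult _ _ u _ _ (cd_const l u)
             (cd_minus _ _ u _ _ (cd_id u) (cd_const z0 u)))). }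
    assert (E : RIr g rN = RI (fun u => Cminus (g u) (A u)) (ra rN) (rb rN) (rc rN) (rd rN)).
    { rewrite RI_minus; auto.
      - unfold A. rewrite affine_RI by auto. unfold RIr. ring.
      - apply Hrect_edge; auto.
      - split; intros; split; apply HcA. }
    assert (Hb2 : Cmod (RIr g rN) <= 2 * ((rb rN - ra rN) + (rd rN - rc rN)) * (eps * (w * p))).
    { rewrite E. apply RI_bound; auto.
      - apply Hrect_edge; auto. intros x y Hx Hy.
        apply ccont_minus; [apply HcN; auto| apply HcA].
      - apply Hrect_edge; auto. intros x y Hx Hy.
        assert (K := Hin x y Hx Hy).
        assert (K2 := Hl' (x, y) ltac:(lra)).
        unfold A.
        replace (Cminus (g (x, y)) (Cplus (g z0) (Cmult l (Cminus (x, y) z0))))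
          with (Cminus (Cminus (g (x, y)) (g z0)) (Cmult l (Cminus (x, y) z0))) by ring.
        eapply Rle_trans; [apply K2|]. apply Rmult_le_compat_l; lra. }
    rewrite Hwid, Hhei in Hb2. fold r0 in Hbig.
    assert (Hb3 : Cmod (RIr g r0) * (p * p) <= 2 * (w * w) * eps * (p * p)).
    { eapply Rle_trans; [apply Hbig|]. eapply Rle_trans; [apply Hb2|].
      unfold w. simpl. right. ring. }
    unfold RIr in Hb3. simpl in Hb3.
    assert (0 < p * p) by nra.
    apply (Rmult_le_reg_r (p * p)); auto; lra. }
  apply Cmod_eq_0. generalize (Cmod_ge_0 (RI g a b c d)). lra.
Qed.

Definition C_eq_dec (u z : C) : {u = z} + {u <> z}.
Proof.
  destruct u as [a b], z as [c d].
  destruct (Req_EM_T a c) as [h1|h1]; [destruct (Req_EM_T b d) as [h2|h2]|].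
  - left. subst. reflexivity.
  - right. intros H. injection H. auto.
  - right. intros H. injection H. auto.
Defined.

Lemma ccont_plus g h x : ccont g x -> ccont h x -> ccont (fun u => Cplus (g u) (h u)) x.
Proof.
  intros H1 H2 eps He. destruct (H1 (eps/2)) as [d1 [Hd1 K1]]; [lra|].
  destruct (H2 (eps/2)) as [d2 [Hd2 K2]]; [lra|].
  exists (Rmin d1 d2). split; [apply Rmin_pos; auto|]. intros u Hu.
  assert (Hu1 : Cmod (Cminus u x) < d1) by (eapply Rlt_le_trans; [apply Hu|apply Rmin_l]).
  assert (Hu2 : Cmod (Cminus u x) < d2) by (eapply Rlt_le_trans; [apply Hu|apply Rmin_r]).
  specialize (K1 u Hu1). specialize (K2 u Hu2).
  replace (Cminus (Cplus (g u) (h u)) (Cplus (g x) (h x)))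
    with (Cplus (Cminus (g u) (g x)) (Cminus (h u) (h x))) by ring.
  eapply Rle_lt_trans; [apply Cmod_triangle|]. lra.
Qed.

Lemma ccont_const c x : ccont (fun _ => c) x.
Proof.
  intros eps He. exists 1. split; [lra|]. intros u _.
  replace (Cminus c c) with (RtoC 0) by ring. rewrite Cmod_0. auto.
Qed.

Lemma ccont_mult g h x : ccont g x -> ccont h x -> ccont (fun u => Cmult (g u) (h u)) x.
Proof.
  intros H1 H2 eps He.
  set (A := Cmod (g x)). set (B := Cmod (h x)).
  assert (HA : 0 <= A) by apply Cmod_ge_0. assert (HB : 0 <= B) by apply Cmod_ge_0.
  set (e := Rmin 1 (eps / (A + B + 2))).
  assert (He0 : 0 < e) by (apply Rmin_pos; [lra| apply Rdiv_lt_0_compat; lra]).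
  assert (He1 : e <= 1) by apply Rmin_l.
  assert (He2 : e * (A + B + 2) <= eps).
  { assert (e <= eps / (A + B + 2)) by apply Rmin_r.
    apply (Rmult_le_compat_r (A + B + 2)) in H; [|lra].
    unfold Rdiv in H. rewrite Rmult_assoc, Rinv_l in H by lra. lra. }
  destruct (H1 e He0) as [d1 [Hd1 K1]]. destruct (H2 e He0) as [d2 [Hd2 K2]].
  exists (Rmin d1 d2). split; [apply Rmin_pos; auto|]. intros u Hu.
  assert (Hu1 : Cmod (Cminus u x) < d1) by (eapply Rlt_le_trans; [apply Hu|apply Rmin_l]).
  assert (Hu2 : Cmod (Cminus u x) < d2) by (eapply Rlt_le_trans; [apply Hu|apply Rmin_r]).
  specialize (K1 u Hu1). specialize (K2 u Hu2).
  replace (Cminus (Cmult (g u) (h u)) (Cmult (g x) (h x)))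
    with (Cplus (Cplus (Cmult (Cminus (g u) (g x)) (Cminus (h u) (h x)))
                       (Cmult (Cminus (g u) (g x)) (h x)))
                (Cmult (g x) (Cminus (h u) (h x)))) by ring.
  eapply Rle_lt_trans; [apply Cmod_triangle|].
  eapply Rle_lt_trans; [apply Rplus_le_compat_r; apply Cmod_triangle|].
  rewrite !Cmod_mult. fold A B.
  set (p := Cmod (Cminus (g u) (g x))) in *. set (q := Cmod (Cminus (h u) (h x))) in *.
  assert (0 <= p) by apply Cmod_ge_0. assert (0 <= q) by apply Cmod_ge_0.
  assert (p * q <= e * e) by (apply Rmult_le_compat; lra).
  assert (p * B <= e * B) by (apply Rmult_le_compat_r; lra).
  assert (A * q <= A * e) by (apply Rmult_le_compat_l; lra).
  assert (e * e <= e * 1) by (apply Rmult_le_compat_l; lra).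
  assert (p * q + p * B + A * q < e * (A + B + 2)).
  { assert (p * q < e * 1 \/ p * B < e * B \/ A * q < A * e \/ True) by auto.
    destruct (Rlt_or_le p e); nra. }
  lra.
Qed.

Lemma hb_plus g h a b y : a <= b -> (forall t, a <= t <= b -> ccont g (t, y) /\ ccont h (t, y)) ->
  hb (fun u => Cplus (g u) (h u)) a b y = Cplus (hb g a b y) (hb h a b y).
Proof. intros Hab H. unfold hb. apply CInt_plus; apply cexi_h; auto; intros; apply H; auto. Qed.

Lemma hv_plus g h x c d : c <= d -> (forall t, c <= t <= d -> ccont g (x, t) /\ ccont h (x, t)) ->
  hv (fun u => Cplus (g u) (h u)) x c d = Cplus (hv g x c d) (hv h x c d).
Proof. intros Hab H. unfold hv. apply CInt_plus; apply cexi_v; auto; intros; apply H; auto. Qed.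

Lemma hb_cmul k g a b y : a <= b -> (forall t, a <= t <= b -> ccont g (t, y)) ->
  hb (fun u => Cmult k (g u)) a b y = Cmult k (hb g a b y).
Proof. intros Hab H. unfold hb. apply CInt_cmul; apply cexi_h; auto. Qed.

Lemma hv_cmul k g x c d : c <= d -> (forall t, c <= t <= d -> ccont g (x, t)) ->
  hv (fun u => Cmult k (g u)) x c d = Cmult k (hv g x c d).
Proof. intros Hab H. unfold hv. apply CInt_cmul; apply cexi_v; auto. Qed.

Lemma RI_plus g h a b c d : a <= b -> c <= d ->
  Hedge (ccont g) a b c d -> Hedge (ccont h) a b c d ->
  RI (fun u => Cplus (g u) (h u)) a b c d = Cplus (RI g a b c d) (RI h a b c d).
Proof.
  intros Hab Hcd [G1 G2] [H1 H2]. unfold RI.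
  rewrite !hb_plus by (auto; intros; split; first [apply G1|apply H1]; auto).
  rewrite !hv_plus by (auto; intros; split; first [apply G2|apply H2]; auto).
  ring.
Qed.

Lemma RI_cmul k g a b c d : a <= b -> c <= d -> Hedge (ccont g) a b c d ->
  RI (fun u => Cmult k (g u)) a b c d = Cmult k (RI g a b c d).
Proof.
  intros Hab Hcd [G1 G2]. unfold RI.
  rewrite !hb_cmul by (auto; intros; apply G1; auto).
  rewrite !hv_cmul by (auto; intros; apply G2; auto).
  ring.
Qed.

Lemma RI_ext_edge g h a b c d : a <= b -> c <= d ->
  Hedge (fun u => g u = h u) a b c d -> RI g a b c d = RI h a b c d.
Proof.
  intros Hab Hcd [E1 E2]. unfold RI, hb, hv.
  rewrite (CInt_ext (fun t => g (t, c)) (fun t => h (t, c)))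
    by (rewrite Rmin_left, Rmax_right by auto; intros; apply E1; lra).
  rewrite (CInt_ext (fun t => g (t, d)) (fun t => h (t, d)))
    by (rewrite Rmin_left, Rmax_right by auto; intros; apply E1; lra).
  rewrite (CInt_ext (fun t => g (a, t)) (fun t => h (a, t)))
    by (rewrite Rmin_left, Rmax_right by auto; intros; apply E2; lra).
  rewrite (CInt_ext (fun t => g (b, t)) (fun t => h (b, t)))
    by (rewrite Rmin_left, Rmax_right by auto; intros; apply E2; lra).
  reflexivity.
Qed.

Lemma Hedge_impl (P Q : C -> Prop) a b c d : (forall u, P u -> Q u) -> Hedge P a b c d -> Hedge Q a b c d.
Proof. intros H [H1 H2]. split; intros; split; apply H; first [apply H1|apply H2]; auto. Qed.

Lemma ccont_Csum (F : nat -> C -> C) N x : (forall k, ccont (F k) x) ->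
  ccont (fun u => Csum (fun k => F k u) N) x.
Proof.
  intros H. induction N as [|N IH].
  - exact (ccont_const (RtoC 0) x).
  - apply (ccont_plus (fun u => Csum (fun k => F k u) N) (F N)); auto.
Qed.

Lemma RI_Csum (F : nat -> C -> C) N a b c d : a <= b -> c <= d ->
  (forall k, Hedge (ccont (F k)) a b c d) ->
  RI (fun u => Csum (fun k => F k u) N) a b c d = Csum (fun k => RI (F k) a b c d) N.
Proof.
  intros Hab Hcd H. induction N as [|N IH].
  - simpl. apply (RI_FTC (fun _ => RtoC 0)); auto.
    split; intros; split; split; first [apply cd_const | apply ccont_const].
  - simpl. rewrite (RI_plus (fun u => Csum (fun k => F k u) N) (F N)); auto.
    + rewrite IH. reflexivity.
    + destruct (H 0%nat) as [P1 P2]. split; intros; split; apply ccont_Csum; intros k;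
      first [apply (proj1 (proj1 (H k) _ H0)) | apply (proj2 (proj1 (H k) _ H0))
            | apply (proj1 (proj2 (H k) _ H0)) | apply (proj2 (proj2 (H k) _ H0))].
Qed.

Lemma abs_bounds x : - Rabs x <= x <= Rabs x.
Proof. split; [| apply RRle_abs]. assert (H := RRle_abs (- x)). rewrite Rabs_Ropp in H. lra. Qed.

Lemma pair_neq (p q x y : R) : p <> x \/ q <> y -> (p, q) <> ((x, y) : C).
Proof. intros [H|H] E; injection E; intros; auto. Qed.

Lemma Cmod_pair_le (p q x y : R) : Cmod (Cminus (p, q) (x, y)) <= Rabs (p - x) + Rabs (q - y).
Proof. eapply Rle_trans; [apply Cmod_le_sum|]. simpl. right. reflexivity. Qed.

Lemma sq_exc h s x y : 0 < s -> Rabs x < s -> Rabs y < s ->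
  (forall u, ccont h u) -> (forall u, u <> (x, y) -> exists l, cd h u l) ->
  RI h (- s) s (- s) s = RtoC 0.
Proof.
  intros Hs Hx Hy HC HD.
  destruct (HC (x, y) 1 Rlt_0_1) as [d1 [Hd1 K1]].
  set (B := Cmod (h (x, y)) + 1).
  assert (HB : 0 <= B) by (unfold B; generalize (Cmod_ge_0 (h (x, y))); lra).
  assert (HR : forall a b c d, Hrect (ccont h) a b c d) by (intros; intros p q _ _; apply HC).
  assert (Hmain : Cmod (RI h (- s) s (- s) s) <= 0).
  { apply (small_zero' _ (8 * B)); [lra|]. intros eps He.
    set (del := Rmin (Rmin eps (d1 / 4)) (Rmin ((s - Rabs x) / 2) ((s - Rabs y) / 2))).
    assert (D0 : 0 < del) by (repeat apply Rmin_pos; lra).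
    assert (D1 : del <= eps) by (eapply Rle_trans; [apply Rmin_l| apply Rmin_l]).
    assert (D2 : del <= d1 / 4) by (eapply Rle_trans; [apply Rmin_l| apply Rmin_r]).
    assert (D3 : del <= (s - Rabs x) / 2) by (eapply Rle_trans; [apply Rmin_r| apply Rmin_l]).
    assert (D4 : del <= (s - Rabs y) / 2) by (eapply Rle_trans; [apply Rmin_r| apply Rmin_r]).
    assert (Ax := abs_bounds x). assert (Ay := abs_bounds y).
    rewrite (RI_cut_v h (- s) (x - del) s) by (auto; lra).
    rewrite (RI_cut_v h (x - del) (x + del) s) by (auto; lra).
    rewrite (RI_cut_h h (x - del) (x + del) (- s) (y - del) s) by (auto; lra).
    rewrite (RI_cut_h h (x - del) (x + del) (y - del) (y + del) s) by (auto; lra).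
    rewrite (goursat h (- s) (x - del) (- s) s) by
      (try lra; intros p q Hp Hq; apply HD; apply pair_neq; left; lra).
    rewrite (goursat h (x + del) s (- s) s) by
      (try lra; intros p q Hp Hq; apply HD; apply pair_neq; left; lra).
    rewrite (goursat h (x - del) (x + del) (- s) (y - del)) by
      (try lra; intros p q Hp Hq; apply HD; apply pair_neq; right; lra).
    rewrite (goursat h (x - del) (x + del) (y + del) s) by
      (try lra; intros p q Hp Hq; apply HD; apply pair_neq; right; lra).
    replace (Cplus (RtoC 0) (Cplus (Cplus (RtoC 0) (Cplus (RI h (x - del) (x + del) (y - del) (y + del)) (RtoC 0))) (RtoC 0)))
      with (RI h (x - del) (x + del) (y - del) (y + del)) by ring.
    eapply Rle_trans; [apply (RI_bound _ _ _ _ _ B); try lra|].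
    - apply Hrect_edge; try lra. apply HR.
    - apply Hrect_edge; try lra. intros p q Hp Hq.
      assert (Hm : Cmod (Cminus (p, q) (x, y)) < d1).
      { eapply Rle_lt_trans; [apply Cmod_pair_le|].
        assert (Rabs (p - x) <= del) by (apply Rabs_le; lra).
        assert (Rabs (q - y) <= del) by (apply Rabs_le; lra). lra. }
      specialize (K1 _ Hm).
      replace (h (p, q)) with (Cplus (Cminus (h (p, q)) (h (x, y))) (h (x, y))) by ring.
      eapply Rle_trans; [apply Cmod_triangle|]. unfold B. lra.
    - replace (x + del - (x - del) + (y + del - (y - del))) with (4 * del) by ring.
      assert (del * B <= eps * B) by (apply Rmult_le_compat_r; lra). lra. }
  apply Cmod_eq_0. generalize (Cmod_ge_0 (RI h (- s) s (- s) s)). lra.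
Qed.

Lemma sq_edge_neq s x y : Rabs x < s -> Rabs y < s ->
  Hedge (fun u => u <> (x, y)) (- s) s (- s) s.
Proof.
  intros Hx Hy. assert (Ax := abs_bounds x). assert (Ay := abs_bounds y).
  split; intros; split; apply pair_neq; lra.
Qed.

Lemma cauchy_formula f s x y : (forall u, exists l, cd f u l) -> 0 < s -> Rabs x < s -> Rabs y < s ->
  RI (fun u => Cmult (f u) (Cinv (Cminus u (x, y)))) (- s) s (- s) s =
  Cmult (f (x, y)) (RI (fun u => Cinv (Cminus u (x, y))) (- s) s (- s) s).
Proof.
  intros Hf Hs Hx Hy. set (z := (x, y) : C).
  destruct (Hf z) as [lz Hlz].
  set (h := fun u => if C_eq_dec u z then lz else Cmult (Cminus (f u) (f z)) (Cinv (Cminus u z))).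
  assert (HD : forall u, u <> z -> exists l, cd h u l).
  { intros u Hu. destruct (Hf u) as [lu Hlu].
    eexists. eapply cd_ext_loc; [|exact (cd_mult _ _ u _ _ (cd_minus _ _ u _ _ Hlu (cd_const (f z) u)) (cd_inv z u Hu))].
    exists (Cmod (Cminus u z)). split.
    { apply Cmod_pos_ne. intros E. apply Hu. replace u with (Cplus (Cminus u z) z) by ring. rewrite E. ring. }
    intros v Hv. unfold h. destruct (C_eq_dec v z) as [E|E]; auto.
    subst v. replace (Cminus z u) with (Copp (Cminus u z)) in Hv by ring. rewrite Cmod_opp in Hv. lra. }
  assert (HC : forall u, ccont h u).
  { intros u. destruct (C_eq_dec u z) as [E|E].
    - subst u. intros eps He. destruct (Hlz (eps / 2)) as [d [Hd K]]; [lra|].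
      exists d. split; auto. intros v Hv. unfold h.
      destruct (C_eq_dec v z) as [E|E]; destruct (C_eq_dec z z) as [_|E']; try (exfalso; auto; fail).
      + replace (Cminus lz lz) with (RtoC 0) by ring. rewrite Cmod_0. auto.
      + assert (Hvz : Cminus v z <> RtoC 0).
        { intros E2. apply E. replace v with (Cplus (Cminus v z) z) by ring. rewrite E2. ring. }
        replace (Cminus (Cmult (Cminus (f v) (f z)) (Cinv (Cminus v z))) lz) with
          (Cmult (Cminus (Cminus (f v) (f z)) (Cmult lz (Cminus v z))) (Cinv (Cminus v z)))
          by (field; auto).
        rewrite Cmod_mult, Cmod_inv by auto.
        assert (Hp : 0 < Cmod (Cminus v z)) by (apply Cmod_pos_ne; auto).
        specialize (K v Hv).
        apply (Rmult_le_compat_r (/ Cmod (Cminus v z))) in K; [|left; apply Rinv_0_lt_compat; auto].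
        rewrite Rmult_assoc, Rinv_r in K by lra. lra.
    - destruct (HD u E) as [l Hl]. eapply cd_ccont; eauto. }
  assert (H0 : RI h (- s) s (- s) s = RtoC 0) by (apply (sq_exc h s x y); auto).
  assert (Hne := sq_edge_neq s x y Hx Hy).
  rewrite (RI_ext_edge _ (fun u => Cplus (Cmult (f z) (Cinv (Cminus u z))) (h u))); try lra.
  - rewrite RI_plus; try lra.
    + rewrite RI_cmul; try lra.
      * rewrite H0. ring.
      * eapply Hedge_impl; [|exact Hne]. intros u Hu. eapply cd_ccont. apply (cd_inv z u Hu).
    + eapply Hedge_impl; [|exact Hne]. intros u Hu. apply ccont_mult; [apply ccont_const|].
      eapply cd_ccont. apply (cd_inv z u Hu).
    + split; intros; split; apply HC.
  - eapply Hedge_impl; [|exact Hne]. intros u Hu. unfold h.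
    destruct (C_eq_dec u z) as [E|E]; [exfalso; auto|].
    assert (Cminus u z <> RtoC 0).
    { intros E2. apply E. replace u with (Cplus (Cminus u z) z) by ring. rewrite E2. ring. }
    field. auto.
Qed.

Definition Sq (g : C -> C) (s : R) : C := RI g (- s) s (- s) s.

Lemma Cmod_fst_le (u : C) : Rabs (fst u) <= Cmod u.
Proof. eapply Rle_trans; [apply Rmax_l| apply Rmax_Cmod]. Qed.
Lemma Cmod_snd_le (u : C) : Rabs (snd u) <= Cmod u.
Proof. eapply Rle_trans; [apply Rmax_r| apply Rmax_Cmod]. Qed.

Lemma edge_pt p q s : Rabs p <= s -> Rabs q <= s -> (Rabs p = s \/ Rabs q = s) ->
  s <= Cmod (p, q) /\ Cmod (p, q) <= 2 * s.
Proof.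
  intros H1 H2 H3. split.
  - destruct H3 as [E|E]; rewrite <- E; [apply (Cmod_fst_le (p, q))| apply (Cmod_snd_le (p, q))].
  - eapply Rle_trans; [apply Cmod_le_sum|]. simpl. lra.
Qed.

Lemma sq_edge_mod s : 0 < s -> Hedge (fun u => s <= Cmod u /\ Cmod u <= 2 * s) (- s) s (- s) s.
Proof.
  intros Hs.
  assert (A1 : Rabs s = s) by (apply Rabs_pos_eq; lra).
  assert (A2 : Rabs (- s) = s) by (rewrite Rabs_Ropp; apply Rabs_pos_eq; lra).
  split; intros t Ht; (assert (At : Rabs t <= s) by (apply Rabs_le; lra));
    split; apply edge_pt; lra.
Qed.

Lemma Cmod_Cpow (w : C) n : Cmod (Defs.Cpow w n) = Cmod w ^ n.
Proof.
  induction n as [|n IH]; simpl.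
  - apply Cmod_1.
  - rewrite Cmod_mult, IH. ring.
Qed.

Lemma Cpow_mult (a b : C) n : Defs.Cpow (Cmult a b) n = Cmult (Defs.Cpow a n) (Defs.Cpow b n).
Proof. induction n as [|n IH]; simpl; [ring|]. rewrite IH. ring. Qed.

Lemma ne0_of_mod (u : C) s : 0 < s -> s <= Cmod u -> u <> RtoC 0.
Proof. intros Hs H E. rewrite E, Cmod_0 in H. lra. Qed.

Lemma Cmod_sub_ge (u z : C) : Cmod u - Cmod z <= Cmod (Cminus u z).
Proof.
  assert (H := Cmod_triangle (Cminus u z) z). replace (Cplus (Cminus u z) z) with u in H by ring. lra.
Qed.

Lemma expand_id (u z : C) N : u <> RtoC 0 -> Cminus u z <> RtoC 0 ->
  Cinv (Cminus u z) =
  Cplus (Csum (fun k => Cmult (Defs.Cpow z k) (Defs.Cpow (Cinv u) (S k))) N)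
        (Cmult (Defs.Cpow (Cmult z (Cinv u)) N) (Cinv (Cminus u z))).
Proof.
  intros Hu Huz. symmetry. induction N as [|N IH].
  - simpl. ring.
  - etransitivity; [|exact IH]. simpl Csum. rewrite !Cpow_mult. simpl Defs.Cpow.
    field. auto.
Qed.

Lemma ccont_inv0 u : u <> RtoC 0 -> ccont (fun v => Cinv v) u.
Proof.
  intros Hu. eapply cd_ccont. eapply cd_ext; [|apply (cd_inv (RtoC 0) u Hu)].
  intros v. simpl. f_equal. ring.
Qed.

Lemma ccont_pow F x n : ccont F x -> ccont (fun u => Defs.Cpow (F u) n) x.
Proof.
  intros H. induction n as [|n IH].
  - exact (ccont_const (RtoC 1) x).
  - apply (ccont_mult (fun u => Defs.Cpow (F u) n) F); auto.
Qed.

Lemma ccont_invz z u : u <> z -> ccont (fun v => Cinv (Cminus v z)) u.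
Proof. intros H. eapply cd_ccont. apply (cd_inv z u H). Qed.

Lemma expand_sq g s z N : 0 < s -> Cmod z <= s / 4 ->
  Hedge (ccont g) (- s) s (- s) s ->
  Sq (fun u => Cmult (g u) (Cinv (Cminus u z))) s =
  Cplus (Csum (fun k => Cmult (Defs.Cpow z k) (Sq (fun u => Cmult (g u) (Defs.Cpow (Cinv u) (S k))) s)) N)
        (Sq (fun u => Cmult (Cmult (g u) (Defs.Cpow (Cmult z (Cinv u)) N)) (Cinv (Cminus u z))) s).
Proof.
  intros Hs Hz Hg. unfold Sq.
  assert (HM := sq_edge_mod s Hs).
  assert (H0 : Hedge (fun u => u <> RtoC 0 /\ u <> z) (- s) s (- s) s).
  { eapply Hedge_impl; [|exact HM]. intros u [H1 H2]. split; [eapply ne0_of_mod; eauto|].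
    intros E. subst. lra. }
  assert (Hgu : Hedge (fun u => ccont g u /\ u <> RtoC 0 /\ u <> z) (- s) s (- s) s).
  { destruct Hg as [G1 G2]. destruct H0 as [K1 K2].
    split; intros t Ht; [destruct (G1 t Ht), (K1 t Ht) | destruct (G2 t Ht), (K2 t Ht)];
      split; split; auto. }
  rewrite (RI_ext_edge _ (fun u => Cplus (Csum (fun k => Cmult (Defs.Cpow z k)
          (Cmult (g u) (Defs.Cpow (Cinv u) (S k)))) N)
          (Cmult (Cmult (g u) (Defs.Cpow (Cmult z (Cinv u)) N)) (Cinv (Cminus u z))))); try lra.
  - rewrite RI_plus; try lra.
    + f_equal. rewrite RI_Csum; try lra.
      * apply Csum_ext. intros k _. apply RI_cmul; try lra.
        eapply Hedge_impl; [|exact Hgu]. intros u [Hc [Hu _]].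
        apply ccont_mult; auto. apply ccont_pow. apply ccont_inv0; auto.
      * intros k. eapply Hedge_impl; [|exact Hgu]. intros u [Hc [Hu _]].
        apply ccont_mult; [apply ccont_const|]. apply ccont_mult; auto.
        apply ccont_pow. apply ccont_inv0; auto.
    + eapply Hedge_impl; [|exact Hgu]. intros u [Hc [Hu _]].
      apply ccont_Csum. intros k.
      apply ccont_mult; [apply ccont_const|]. apply ccont_mult; auto.
      apply ccont_pow. apply ccont_inv0; auto.
    + eapply Hedge_impl; [|exact Hgu]. intros u [Hc [Hu Huz]].
      apply ccont_mult; [apply ccont_mult; auto|].
      * apply ccont_pow. apply ccont_mult; [apply ccont_const| apply ccont_inv0; auto].
      * apply ccont_invz; auto.
  - eapply Hedge_impl; [|exact Hgu]. intros u [_ [Hu Huz]].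
    assert (Cminus u z <> RtoC 0).
    { intros E. apply Huz. replace u with (Cplus (Cminus u z) z) by ring. rewrite E. ring. }
    rewrite (expand_id u z N) at 1 by auto.
    rewrite Cmult_plus_distr_l. f_equal.
    + rewrite <- Csum_scal. apply Csum_ext. intros; ring.
    + ring.
Qed.

Lemma Sq_ext f g s : 0 < s -> (forall u, f u = g u) -> Sq f s = Sq g s.
Proof. intros Hs H. unfold Sq. apply RI_ext_edge; try lra. split; intros; split; auto. Qed.

Lemma RtoC_neq0 r : r <> 0 -> RtoC r <> RtoC 0.
Proof. intros H E. apply H. injection E. auto. Qed.

Lemma sq_orth s k : 0 < s -> Sq (fun u => Defs.Cpow (Cinv u) (S (S k))) s = RtoC 0.
Proof.
  intros Hs. unfold Sq.
  apply (RI_FTC (fun u => Cmult (RtoC (- / INR (S k))) (Defs.Cpow (Cinv u) (S k)))); try lra.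
  eapply Hedge_impl; [|apply (sq_edge_mod s Hs)]. intros u [Hu _].
  assert (Hu0 : u <> RtoC 0) by (eapply ne0_of_mod; eauto).
  split.
  - assert (K1 := cd_inv (RtoC 0) u Hu0).
    assert (K1' : cd (fun v => Cinv v) u (Copp (Cinv (Cmult u u)))).
    { eapply cd_ext; [|eapply cd_l_ext; [|exact K1]].
      - intros v. simpl. f_equal. ring.
      - f_equal. f_equal; ring. }
    assert (K2 := cd_pow _ _ _ k K1').
    assert (K3 := cd_mult _ _ u _ _ (cd_const (RtoC (- / INR (S k))) u) K2).
    eapply cd_l_ext; [|exact K3].
    assert (HS : INR (S k) <> 0) by (apply not_0_INR; lia).
    rewrite RtoC_opp, RtoC_inv by auto.
    assert (RtoC (INR (S k)) <> RtoC 0) by (apply RtoC_neq0; auto).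
    change (Defs.Cpow (Cinv u) (S (S k))) with (Cmult (Cmult (Defs.Cpow (Cinv u) k) (Cinv u)) (Cinv u)).
    field. split; auto.
  - apply ccont_pow. apply ccont_inv0; auto.
Qed.

Lemma edge_bounds s u z : 0 < s -> s <= Cmod u -> Cmod z <= s / 4 ->
  (forall N, Cmod (Defs.Cpow (Cmult z (Cinv u)) N) <= (/ 4) ^ N) /\
  Cmod (Cinv (Cminus u z)) <= 4 / (3 * s) /\
  (forall n, Cmod (Defs.Cpow (Cinv u) n) <= (/ s) ^ n).
Proof.
  intros Hs Hu Hz.
  assert (Hu0 : u <> RtoC 0) by (eapply ne0_of_mod; eauto).
  assert (Hp : 0 < Cmod u) by lra.
  split; [|split].
  - intros N. rewrite Cmod_Cpow. apply pow_incr. split; [apply Cmod_ge_0|].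
    rewrite Cmod_mult, Cmod_inv by auto.
    apply (Rmult_le_reg_r (Cmod u)); auto. rewrite Rmult_assoc, Rinv_l by lra.
    assert (0 <= Cmod z) by apply Cmod_ge_0. nra.
  - assert (Hg : 3 * s / 4 <= Cmod (Cminus u z)) by (generalize (Cmod_sub_ge u z); lra).
    assert (Huz : Cminus u z <> RtoC 0) by (intros E; rewrite E, Cmod_0 in Hg; lra).
    rewrite Cmod_inv by auto.
    replace (4 / (3 * s)) with (/ (3 * s / 4)) by (field; lra).
    apply Rinv_le_contravar; lra.
  - intros n. rewrite Cmod_Cpow. apply pow_incr. split; [apply Cmod_ge_0|].
    rewrite Cmod_inv by auto. apply Rinv_le_contravar; lra.
Qed.

Lemma Jz_eq s z : 0 < s -> Cmod z <= s / 4 ->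
  Sq (fun u => Cinv (Cminus u z)) s = Sq (fun u => Cinv u) s.
Proof.
  intros Hs Hz.
  assert (Hd : forall N, Cmod (Cminus (Sq (fun u => Cinv (Cminus u z)) s) (Sq (fun u => Cinv u) s))
                 <= 2 * (4 * s) * ((/ 4) ^ (S N) * (4 / (3 * s)))).
  { intros N.
    rewrite (Sq_ext _ (fun u => Cmult (RtoC 1) (Cinv (Cminus u z)))) by (auto; intros; ring).
    rewrite (expand_sq (fun _ => RtoC 1) s z (S N)); auto.
    2:{ split; intros; split; apply ccont_const. }
    rewrite Csum_shift.
    rewrite (Csum_ext _ (fun _ => RtoC 0)).
    2:{ intros k _. rewrite (Sq_ext _ (fun u => Defs.Cpow (Cinv u) (S (S k)))) by (auto; intros; ring).
        rewrite sq_orth by auto. ring. }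
    rewrite Csum_zero.
    rewrite (Sq_ext (fun u => Cmult (RtoC 1) (Defs.Cpow (Cinv u) 1)) (fun u => Cinv u))
      by (auto; intros; simpl; ring).
    replace (Cminus (Cplus (Cplus (Cmult (Defs.Cpow z 0) (Sq (fun u => Cinv u) s)) (RtoC 0))
       (Sq (fun u => Cmult (Cmult (RtoC 1) (Defs.Cpow (Cmult z (Cinv u)) (S N))) (Cinv (Cminus u z))) s))
       (Sq (fun u => Cinv u) s))
      with (Sq (fun u => Cmult (Cmult (RtoC 1) (Defs.Cpow (Cmult z (Cinv u)) (S N))) (Cinv (Cminus u z))) s)
      by (simpl; ring).
    unfold Sq. eapply Rle_trans; [apply (RI_bound _ _ _ _ _ ((/ 4) ^ (S N) * (4 / (3 * s)))); try lra|].
    - eapply Hedge_impl; [|apply (sq_edge_mod s Hs)]. intros u [Hu _].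
      assert (Hu0 : u <> RtoC 0) by (eapply ne0_of_mod; eauto).
      assert (Huz : u <> z) by (intros E; subst; lra).
      apply ccont_mult; [apply ccont_mult; [apply ccont_const|]|].
      + apply ccont_pow. apply ccont_mult; [apply ccont_const| apply ccont_inv0; auto].
      + apply ccont_invz; auto.
    - eapply Hedge_impl; [|apply (sq_edge_mod s Hs)]. intros u [Hu _].
      destruct (edge_bounds s u z Hs Hu Hz) as [B1 [B2 _]].
      rewrite !Cmod_mult, Cmod_1, Rmult_1_l.
      apply Rmult_le_compat; try apply Cmod_ge_0; auto.
    - right. ring. }
  assert (Hm : Cmod (Cminus (Sq (fun u => Cinv (Cminus u z)) s) (Sq (fun u => Cinv u) s)) <= 0).
  { apply (small_zero' _ (32 / 3)); [lra|]. intros eps He.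
    destruct (pow_lt_1_zero (/ 4) ltac:(rewrite Rabs_pos_eq; lra) eps He) as [N HN].
    specialize (HN N (le_n N)). rewrite Rabs_pos_eq in HN by (apply pow_le; lra).
    eapply Rle_trans; [apply (Hd N)|]. simpl pow.
    replace (2 * (4 * s) * (/ 4 * (/ 4) ^ N * (4 / (3 * s)))) with (8 / 3 * (/ 4) ^ N) by (field; lra).
    lra. }
  assert (E : Cminus (Sq (fun u => Cinv (Cminus u z)) s) (Sq (fun u => Cinv u) s) = RtoC 0).
  { apply Cmod_eq_0. generalize (Cmod_ge_0 (Cminus (Sq (fun u => Cinv (Cminus u z)) s) (Sq (fun u => Cinv u) s))). lra. }
  replace (Sq (fun u => Cinv (Cminus u z)) s) with
    (Cplus (Cminus (Sq (fun u => Cinv (Cminus u z)) s) (Sq (fun u => Cinv u) s)) (Sq (fun u => Cinv u) s)) by ring.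
  rewrite E. ring.
Qed.

Lemma snd_RI g a b c d : snd (RI g a b c d) =
  snd (hb g a b c) + fst (hv g b c d) - snd (hb g a b d) - fst (hv g a c d).
Proof.
  unfold RI. destruct (hb g a b c) as [p1 p2]. destruct (hv g b c d) as [p3 p4].
  destruct (hb g a b d) as [p5 p6]. destruct (hv g a c d) as [p7 p8].
  unfold Ci. simpl. ring.
Qed.

Lemma key_ineq t s : 0 < s -> - s <= t <= s -> / (2 * s) <= s / (t * t + s * s).
Proof.
  intros Hs Ht.
  assert (Ht2 : t * t <= s * s) by nra.
  assert (Hp : 0 < t * t + s * s) by nra.
  replace (/ (2 * s)) with (s / (2 * (s * s))) by (field; lra).
  unfold Rdiv. apply Rmult_le_compat_l; [lra|]. apply Rinv_le_contravar; nra.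
Qed.

Lemma RInt_lb f s c : 0 < s -> ex_RInt f (- s) s -> (forall t, - s < t < s -> c <= f t) ->
  2 * s * c <= RInt f (- s) s.
Proof.
  intros Hs He H.
  assert (E : RInt (fun _ => c) (- s) s = 2 * s * c).
  { rewrite RInt_const. unfold scal; simpl. unfold mult; simpl. ring. }
  rewrite <- E. apply RInt_le; auto; try lra. apply ex_RInt_const.
Qed.

Lemma RInt_ub f s c : 0 < s -> ex_RInt f (- s) s -> (forall t, - s < t < s -> f t <= c) ->
  RInt f (- s) s <= 2 * s * c.
Proof.
  intros Hs He H.
  assert (E : RInt (fun _ => c) (- s) s = 2 * s * c).
  { rewrite RInt_const. unfold scal; simpl. unfold mult; simpl. ring. }
  rewrite <- E. apply RInt_le; auto; try lra. apply ex_RInt_const.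
Qed.

Lemma inv_pair p q : Cinv (p, q) = (p / (p * p + q * q), - q / (p * p + q * q)).
Proof. unfold Cinv. cbn [fst snd]. replace (p ^ 2 + q ^ 2) with (p * p + q * q) by ring. reflexivity. Qed.

Lemma J_bound s : 0 < s -> 4 <= Cmod (Sq (fun u => Cinv u) s).
Proof.
  intros Hs.
  assert (HC : Hedge (ccont (fun u => Cinv u)) (- s) s (- s) s).
  { eapply Hedge_impl; [|apply (sq_edge_mod s Hs)]. intros u [Hu _].
    apply ccont_inv0. eapply ne0_of_mod; eauto. }
  destruct HC as [HC1 HC2].
  assert (X1 : cexi (fun t => Cinv (t, - s)) (- s) s) by (apply cexi_h; try lra; intros; apply HC1; auto).
  assert (X2 : cexi (fun t => Cinv (t, s)) (- s) s) by (apply cexi_h; try lra; intros; apply HC1; auto).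
  assert (X3 : cexi (fun t => Cinv (s, t)) (- s) s) by (apply cexi_v; try lra; intros; apply HC2; auto).
  assert (X4 : cexi (fun t => Cinv (- s, t)) (- s) s) by (apply cexi_v; try lra; intros; apply HC2; auto).
  assert (Him : 4 <= snd (Sq (fun u => Cinv u) s)).
  { unfold Sq. rewrite snd_RI. unfold hb, hv.
    rewrite (CInt_snd _ _ _ X1), (CInt_snd _ _ _ X2), (CInt_fst _ _ _ X3), (CInt_fst _ _ _ X4).
    assert (R1 : 1 <= RInt (fun t => snd (Cinv (t, - s))) (- s) s).
    { replace 1 with (2 * s * / (2 * s)) by (field; lra).
      apply RInt_lb; auto. apply cexi_snd; auto.
      intros t Ht. rewrite inv_pair; cbn [fst snd].
      replace (- - s / (t * t + - s * - s)) with (s / (t * t + s * s)) by (field; nra).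
      apply key_ineq; lra. }
    assert (R2 : 1 <= RInt (fun t => fst (Cinv (s, t))) (- s) s).
    { replace 1 with (2 * s * / (2 * s)) by (field; lra).
      apply RInt_lb; auto. apply cexi_fst; auto.
      intros t Ht. rewrite inv_pair; cbn [fst snd].
      replace (s / (s * s + t * t)) with (s / (t * t + s * s)) by (field; nra).
      apply key_ineq; lra. }
    assert (R3 : RInt (fun t => snd (Cinv (t, s))) (- s) s <= - 1).
    { replace (- 1) with (2 * s * - / (2 * s)) by (field; lra).
      apply RInt_ub; auto. apply cexi_snd; auto.
      intros t Ht. rewrite inv_pair; cbn [fst snd].
      replace (- s / (t * t + s * s)) with (- (s / (t * t + s * s))) by (field; nra).
      apply Ropp_le_contravar. apply key_ineq; lra. }
    assert (R4 : RInt (fun t => fst (Cinv (- s, t))) (- s) s <= - 1).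
    { replace (- 1) with (2 * s * - / (2 * s)) by (field; lra).
      apply RInt_ub; auto. apply cexi_fst; auto.
      intros t Ht. rewrite inv_pair; cbn [fst snd].
      replace (- s / (- s * - s + t * t)) with (- (s / (t * t + s * s))) by (field; nra).
      apply Ropp_le_contravar. apply key_ineq; lra. }
    lra. }
  eapply Rle_trans; [exact Him|]. eapply Rle_trans; [apply RRle_abs| apply Cmod_snd_le].
Qed.

Lemma taylor_sq f s z N : (forall u, exists l, cd f u l) -> 0 < s -> Cmod z <= s / 4 ->
  Cmult (f z) (Sq (fun u => Cinv u) s) =
  Cplus (Csum (fun k => Cmult (Defs.Cpow z k) (Sq (fun u => Cmult (f u) (Defs.Cpow (Cinv u) (S k))) s)) N)
        (Sq (fun u => Cmult (Cmult (f u) (Defs.Cpow (Cmult z (Cinv u)) N)) (Cinv (Cminus u z))) s).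
Proof.
  intros Hf Hs Hz.
  rewrite <- (Jz_eq s z Hs Hz).
  rewrite <- (expand_sq f s z N Hs Hz).
  2:{ assert (Hfc : forall u, ccont f u) by (intros u; destruct (Hf u) as [l Hl]; eapply cd_ccont; eauto).
      split; intros; split; apply Hfc. }
  destruct z as [x y].
  assert (Hx : Rabs x < s) by (generalize (Cmod_fst_le (x, y)); simpl; lra).
  assert (Hy : Rabs y < s) by (generalize (Cmod_snd_le (x, y)); simpl; lra).
  unfold Sq. symmetry. apply cauchy_formula; auto.
Qed.

Fixpoint Rsum (a : nat -> R) (N : nat) : R :=
  match N with O => 0 | S k => Rsum a k + a k end.

Lemma Cmod_Csum a N : Cmod (Csum a N) <= Rsum (fun k => Cmod (a k)) N.
Proof.
  induction N as [|N IH]; simpl.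
  - rewrite Cmod_0. lra.
  - eapply Rle_trans; [apply Cmod_triangle|]. lra.
Qed.

Lemma Rsum_le a b N : (forall k, (k < N)%nat -> a k <= b k) -> Rsum a N <= Rsum b N.
Proof.
  induction N as [|N IH]; intros H; simpl; [lra|].
  assert (Rsum a N <= Rsum b N) by (apply IH; intros; apply H; lia).
  assert (a N <= b N) by (apply H; lia). lra.
Qed.

Lemma Rsum_scal c a N : Rsum (fun k => c * a k) N = c * Rsum a N.
Proof. induction N as [|N IH]; simpl; [ring|]. rewrite IH. ring. Qed.

Lemma Rsum_mult_r a c N : Rsum a N * c = Rsum (fun k => a k * c) N.
Proof. induction N as [|N IH]; simpl; [ring|]. rewrite <- IH. ring. Qed.

Lemma mult3_le A A' B B' C C' : 0 <= A -> A <= A' -> 0 <= B -> B <= B' -> 0 <= C -> C <= C' ->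
  A * B * C <= A' * B' * C'.
Proof.
  intros. apply Rmult_le_compat; auto.
  - apply Rmult_le_pos; auto.
  - apply Rmult_le_compat; auto.
Qed.

Lemma Rsum_geom N : Rsum (fun k => (/ 4) ^ k) N <= 4 / 3.
Proof.
  assert (E : Rsum (fun k => (/ 4) ^ k) N = 4 / 3 * (1 - (/ 4) ^ N)).
  { induction N as [|N IH]; simpl; [field|]. rewrite IH. field. }
  rewrite E. assert (0 <= (/ 4) ^ N) by (apply pow_le; lra). lra.
Qed.

Lemma pow_exp a k : (exp a) ^ k = exp (INR k * a).
Proof.
  induction k as [|k IH].
  - simpl. rewrite Rmult_0_l, exp_0. reflexivity.
  - rewrite <- tech_pow_Rmult, IH, <- exp_plus, S_INR. f_equal. ring.
Qed.

Lemma exp_mono a b : a <= b -> exp a <= exp b.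
Proof.
  intros H. destruct (Rle_lt_or_eq_dec _ _ H) as [h|h]; [left; apply exp_increasing; auto| rewrite h; lra].
Qed.

Lemma xk_exp (x y nn : R) k : 0 < y -> y <= x -> 0 < nn -> INR k * nn <= y ->
  x ^ k * exp (- x / nn) <= y ^ k * exp (- y / nn).
Proof.
  intros Hy Hxy Hn Hk.
  assert (E1 : x ^ k = y ^ k * (x / y) ^ k).
  { rewrite <- Rpow_mult_distr. f_equal. field. lra. }
  assert (Hq : 0 <= x / y) by (apply Rdiv_le_0_compat; lra).
  assert (B1 : x / y <= exp (x / y - 1)) by (generalize (exp_ineq1_le (x / y - 1)); lra).
  assert (B2 : (x / y) ^ k <= exp (INR k * (x / y - 1))).
  { rewrite <- pow_exp. apply pow_incr. lra. }
  assert (B3 : INR k * (x / y - 1) <= (x - y) / nn).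
  { replace (INR k * (x / y - 1)) with ((x - y) * (INR k / y)) by (field; lra).
    replace ((x - y) / nn) with ((x - y) * (/ nn)) by (unfold Rdiv; ring).
    apply Rmult_le_compat_l; [lra|].
    apply (Rmult_le_reg_r y); auto. unfold Rdiv. rewrite Rmult_assoc, Rinv_l by lra.
    apply (Rmult_le_reg_r nn); auto. rewrite Rmult_1_r.
    replace (/ nn * y * nn) with y by (field; lra). lra. }
  rewrite E1.
  assert (Hyk : 0 <= y ^ k) by (apply pow_le; lra).
  assert (B4 : (x / y) ^ k * exp (- x / nn) <= exp (- y / nn)).
  { apply Rle_trans with (exp (INR k * (x / y - 1)) * exp (- x / nn)).
    { apply Rmult_le_compat_r; [left; apply exp_pos| exact B2]. }
    apply Rle_trans with (exp ((x - y) / nn) * exp (- x / nn)).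
    { apply Rmult_le_compat_r; [left; apply exp_pos| apply exp_mono; exact B3]. }
    rewrite <- exp_plus. right. f_equal. field. lra. }
  rewrite Rmult_assoc. apply Rmult_le_compat_l; auto.
Qed.

Lemma Hfd_of_entire f : entire f -> forall u, exists l, cd f u l.
Proof. intros H u. destruct (H u) as [l Hl]. exists l. apply cd_isd. exact Hl. Qed.


Lemma approx f : E1min f -> forall n, (1 <= n)%nat -> forall eps, 0 < eps ->
  exists b N, forall z, Cmod (Cminus (f z) (Pm b N z)) * exp (- Cmod z / INR n) <= eps.
Proof.
  intros [Hent Hbd] n Hn eps He.
  assert (Hfd := Hfd_of_entire f Hent).
  assert (Hfc : forall u, ccont f u) by (intros u; destruct (Hfd u) as [l Hl]; eapply cd_ccont; eauto).
  destruct (Hbd (16 * n)%nat ltac:(lia)) as [M HM].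
  assert (Hn0 : 0 < INR n) by (apply lt_0_INR; lia).
  assert (E16 : INR (16 * n) = 16 * INR n) by (rewrite mult_INR; simpl; ring).
  assert (HM0 : 0 <= M).
  { eapply Rle_trans; [|apply (HM (RtoC 0))]. apply Rmult_le_pos; [apply Cmod_ge_0| left; apply exp_pos]. }
  assert (Hfb : forall u, Cmod (f u) <= M * exp (Cmod u / (16 * INR n))).
  { intros u. specialize (HM u). rewrite E16 in HM.
    assert (E : exp (- Cmod u / (16 * INR n)) * exp (Cmod u / (16 * INR n)) = 1).
    { rewrite <- exp_plus. replace (- Cmod u / (16 * INR n) + Cmod u / (16 * INR n)) with 0 by (field; lra).
      apply exp_0. }
    apply (Rmult_le_reg_r (exp (- Cmod u / (16 * INR n)))); [apply exp_pos|].
    rewrite Rmult_assoc, (Rmult_comm (exp (Cmod u / _))), E. lra. }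
  set (e1 := exp 1).
  assert (He1 : 2 < e1) by (unfold e1; generalize (exp_ineq1 1 ltac:(lra)); lra).
  assert (He3 : e1 <= 3) by apply exp_le_3.
  set (q := e1 / 4).
  assert (Hq : 0 < q < 1) by (unfold q; lra).
  destruct (pow_lt_1_zero q ltac:(rewrite Rabs_pos_eq; lra) (eps / (4 * M + 1)))
    as [N0 HN0]; [apply Rdiv_lt_0_compat; lra|].
  set (N := S N0).
  assert (HqN0 : 0 <= q ^ N) by (apply pow_le; lra).
  assert (HqN : 4 * M * q ^ N < eps).
  { specialize (HN0 N ltac:(unfold N; lia)). rewrite Rabs_pos_eq in HN0 by auto.
    apply (Rmult_lt_compat_l (4 * M + 1)) in HN0; [|lra].
    replace ((4 * M + 1) * (eps / (4 * M + 1))) with eps in HN0 by (field; lra). nra. }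
  assert (HN1 : 1 <= INR N) by (unfold N; rewrite S_INR; generalize (pos_INR N0); lra).
  set (s := 8 * INR n * INR N).
  assert (Hs : 0 < s) by (unfold s; nra).
  set (J := Sq (fun u => Cinv u) s).
  assert (HJ : 4 <= Cmod J) by apply J_bound, Hs.
  assert (HJ0 : J <> RtoC 0) by (intros E; rewrite E, Cmod_0 in HJ; lra).
  set (b := fun k => Sq (fun u => Cmult (f u) (Defs.Cpow (Cinv u) (S k))) s).
  set (K := M * exp (INR N)).
  assert (HK : 0 <= K) by (unfold K; apply Rmult_le_pos; [lra| left; apply exp_pos]).
  assert (HKq : K * (/ 4) ^ N = M * q ^ N).
  { unfold K, q, e1. rewrite <- (Rmult_1_r (INR N)), <- pow_exp.
    rewrite Rmult_assoc, <- Rpow_mult_distr. reflexivity. }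
  assert (Hedgef : Hedge (fun u => Cmod (f u) <= K /\ s <= Cmod u) (- s) s (- s) s).
  { eapply Hedge_impl; [|apply (sq_edge_mod s Hs)]. intros u [Hu1 Hu2]. split; auto.
    eapply Rle_trans; [apply Hfb|]. unfold K. apply Rmult_le_compat_l; auto. apply exp_mono.
    apply (Rmult_le_reg_r (16 * INR n)); [lra|]. unfold Rdiv. rewrite Rmult_assoc, Rinv_l by lra.
    unfold s in Hu2. nra. }
  assert (Hbk : forall k, Cmod (b k) <= 8 * K * (/ s) ^ k).
  { intros k. unfold b, Sq. eapply Rle_trans; [apply (RI_bound _ _ _ _ _ (K * (/ s) ^ (S k))); try lra|].
    - eapply Hedge_impl; [|apply (sq_edge_mod s Hs)]. intros u [Hu _].
      apply ccont_mult; [apply Hfc| apply ccont_pow, ccont_inv0; eapply ne0_of_mod; eauto].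
    - eapply Hedge_impl; [|exact Hedgef]. intros u [Hf1 Hu]. rewrite Cmod_mult.
      destruct (edge_bounds s u (RtoC 0) Hs Hu ltac:(rewrite Cmod_0; lra)) as [_ [_ B3]].
      apply Rmult_le_compat; try apply Cmod_ge_0; auto.
    - simpl pow. right. field. lra. }
  exists (fun k => Cmult (b k) (Cinv J)), N.
  intros z.
  set (x := Cmod z).
  assert (Hx : 0 <= x) by apply Cmod_ge_0.
  destruct (Rle_lt_dec x (s / 4)) as [Hin|Hout].
  -
    assert (Hw : exp (- x / INR n) <= 1).
    { rewrite <- exp_0. apply exp_mono. unfold Rdiv.
      assert (0 <= x * / INR n) by (apply Rmult_le_pos; [lra| left; apply Rinv_0_lt_compat; lra]). lra. }
    assert (T := taylor_sq f s z N Hfd Hs Hin). fold J in T.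
    set (R := Sq (fun u => Cmult (Cmult (f u) (Defs.Cpow (Cmult z (Cinv u)) N)) (Cinv (Cminus u z))) s) in T.
    assert (HR : Cmod R <= 2 * (4 * s) * (K * ((/ 4) ^ N * (4 / (3 * s))))).
    { unfold R, Sq. eapply Rle_trans; [apply (RI_bound _ _ _ _ _ (K * ((/ 4) ^ N * (4 / (3 * s))))); try lra|].
      - eapply Hedge_impl; [|apply (sq_edge_mod s Hs)]. intros u [Hu _].
        assert (Hu0 : u <> RtoC 0) by (eapply ne0_of_mod; eauto).
        assert (Huz : u <> z) by (intros E; subst; unfold x in Hin; lra).
        apply ccont_mult; [apply ccont_mult; [apply Hfc|]|].
        + apply ccont_pow. apply ccont_mult; [apply ccont_const| apply ccont_inv0; auto].
        + apply ccont_invz; auto.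
      - eapply Hedge_impl; [|exact Hedgef]. intros u [Hf1 Hu].
        destruct (edge_bounds s u z Hs Hu Hin) as [B1 [B2 _]].
        rewrite !Cmod_mult. rewrite Rmult_assoc.
        apply Rmult_le_compat; try apply Rmult_le_pos; try apply Cmod_ge_0; auto.
        apply Rmult_le_compat; try apply Cmod_ge_0; auto.
      - right. ring. }
    assert (E : Cminus (f z) (Pm (fun k => Cmult (b k) (Cinv J)) N z) = Cmult R (Cinv J)).
    { unfold Pm.
      replace (Csum (fun k => Cmult (Cmult (b k) (Cinv J)) (Defs.Cpow z k)) N)
        with (Cmult (Cinv J) (Csum (fun k => Cmult (Defs.Cpow z k) (b k)) N)).
      2:{ rewrite <- Csum_scal. apply Csum_ext. intros; ring. }
      replace (f z) with (Cmult (Cmult (f z) J) (Cinv J)) by (field; auto).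
      rewrite T. unfold b. field. auto. }
    rewrite E, Cmod_mult, Cmod_inv by auto.
    assert (HR0 : 0 <= Cmod R) by apply Cmod_ge_0.
    assert (HJi : / Cmod J <= / 4) by (apply Rinv_le_contravar; lra).
    assert (HJi0 : 0 < / Cmod J) by (apply Rinv_0_lt_compat; lra).
    apply Rle_trans with (Cmod R * / 4 * 1).
    { apply Rmult_le_compat; try (left; apply exp_pos); auto.
      - apply Rmult_le_pos; lra.
      - apply Rmult_le_compat_l; auto. }
    replace (2 * (4 * s) * (K * ((/ 4) ^ N * (4 / (3 * s))))) with (32 / 3 * (K * (/ 4) ^ N)) in HR
      by (field; lra).
    rewrite HKq in HR. nra.
  -
    unfold Cminus. eapply Rle_trans; [apply Rmult_le_compat_r; [left; apply exp_pos| apply Cmod_triangle]|].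
    rewrite Cmod_opp, Rmult_plus_distr_r.
    assert (HeN : exp (- INR N) <= q ^ N).
    { replace (- INR N) with (INR N * (- 1)) by ring. rewrite <- pow_exp.
      apply pow_incr. split; [left; apply exp_pos|].
      replace (exp (- 1)) with (/ e1) by (unfold e1; rewrite <- exp_Ropp; f_equal; ring). unfold q.
      apply (Rmult_le_reg_r e1); [lra|]. rewrite Rinv_l by lra. nra. }
    assert (T1 : Cmod (f z) * exp (- x / INR n) <= M * exp (- INR N)).
    { eapply Rle_trans; [apply Rmult_le_compat_r; [left; apply exp_pos| apply Hfb]|].
      fold x. rewrite Rmult_assoc, <- exp_plus. apply Rmult_le_compat_l; auto. apply exp_mono.
      unfold s in Hout.
      apply (Rmult_le_reg_r (16 * INR n)); [lra|].
      replace ((x / (16 * INR n) + - x / INR n) * (16 * INR n)) with (- 15 * x) by (field; lra).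
      nra. }
    assert (T2 : Cmod (Pm (fun k => Cmult (b k) (Cinv J)) N z) * exp (- x / INR n)
                 <= 8 / 3 * M * exp (- INR N)).
    { unfold Pm. eapply Rle_trans; [apply Rmult_le_compat_r; [left; apply exp_pos| apply Cmod_Csum]|].
      apply Rle_trans with (Rsum (fun k => 2 * K * exp (- (2 * INR N)) * (/ 4) ^ k) N * 1).
      - rewrite Rmult_1_r.
        apply Rle_trans with (Rsum (fun k => Cmod (Cmult (Cmult (b k) (Cinv J)) (Defs.Cpow z k)) * exp (- x / INR n)) N).
        { right. apply Rsum_mult_r. }
        apply Rsum_le. intros k Hk.
        rewrite !Cmod_mult, Cmod_inv, Cmod_Cpow by auto. fold x.
        assert (Hbk' := Hbk k).
        assert (Hxk : x ^ k * exp (- x / INR n) <= (s / 4) ^ k * exp (- (s / 4) / INR n)).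
        { apply xk_exp; try lra.
          unfold s. assert (INR k <= INR N) by (apply le_INR; lia). nra. }
        assert (E2 : exp (- (s / 4) / INR n) = exp (- (2 * INR N))).
        { f_equal. unfold s. field. lra. }
        rewrite E2 in Hxk.
        assert (Hxk0 : 0 <= x ^ k) by (apply pow_le; lra).
        assert (Hsk : (/ s) ^ k * (s / 4) ^ k = (/ 4) ^ k).
        { rewrite <- Rpow_mult_distr. f_equal. field. lra. }
        rewrite (Rmult_assoc (Cmod (b k) * / Cmod J)).
        apply Rle_trans with ((8 * K * (/ s) ^ k) * / 4 * ((s / 4) ^ k * exp (- (2 * INR N)))).
        { apply mult3_le; auto.
          - apply Cmod_ge_0.
          - left; apply Rinv_0_lt_compat; lra.
          - apply Rinv_le_contravar; lra.
          - apply Rmult_le_pos; auto. left; apply exp_pos. }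
        replace ((8 * K * (/ s) ^ k) * / 4 * ((s / 4) ^ k * exp (- (2 * INR N))))
          with (2 * K * exp (- (2 * INR N)) * ((/ s) ^ k * (s / 4) ^ k)) by field.
        rewrite Hsk. right. reflexivity.
      - rewrite Rmult_1_r, Rsum_scal.
        assert (G := Rsum_geom N).
        assert (E3 : K * exp (- (2 * INR N)) = M * exp (- INR N)).
        { unfold K. rewrite Rmult_assoc, <- exp_plus. f_equal. f_equal. ring. }
        assert (0 <= 2 * K * exp (- (2 * INR N))) by (apply Rmult_le_pos; [lra| left; apply exp_pos]).
        apply Rle_trans with (2 * K * exp (- (2 * INR N)) * (4 / 3)).
        { apply Rmult_le_compat_l; auto. }
        replace (2 * K * exp (- (2 * INR N)) * (4 / 3)) with (8 / 3 * (K * exp (- (2 * INR N)))) by field. rewrite E3. right; ring. }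
    assert (0 <= M * exp (- INR N)) by (apply Rmult_le_pos; [lra| left; apply exp_pos]).
    assert (M * exp (- INR N) <= M * q ^ N) by (apply Rmult_le_compat_l; auto).
    fold x in T1. lra.
Qed.



Lemma exd_mult (f g : C -> C) x :
  ex_derive (K := C_AbsRing) (V := C_NormedModule) f x ->
  ex_derive (K := C_AbsRing) (V := C_NormedModule) g x ->
  ex_derive (K := C_AbsRing) (V := C_NormedModule) (fun y => Cmult (f y) (g y)) x.
Proof.
  intros [df Hf] [dg Hg]. eexists.
  apply isd_conv in Hf. apply isd_conv in Hg. apply isd_conv.
  exact (is_derive_mult (K := C_AbsRing) f g x df dg Hf Hg (fun a b => Cmult_comm a b)).
Qed.

Lemma exd_id x : ex_derive (K := C_AbsRing) (V := C_NormedModule) (fun y => y) x.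
Proof. destruct (ex_derive_id (K:=C_AbsRing) x) as [l Hl]. exists l. apply isd_conv. exact Hl. Qed.

Lemma E1min_ext f g : (forall z, f z = g z) -> E1min f -> E1min g.
Proof.
  intros E [Hd Hb]. split.
  - intros z. apply (ex_derive_ext f g); auto.
  - intros n Hn. destruct (Hb n Hn) as [M HM]. exists M. intros z. rewrite <- E. apply HM.
Qed.

Lemma E1min_plus f g : E1min f -> E1min g -> E1min (fun w => Cplus (f w) (g w)).
Proof.
  intros [Hdf Hbf] [Hdg Hbg]. split.
  - intros z. apply (ex_derive_plus (K := C_AbsRing) (V := C_NormedModule) f g); auto.
  - intros n Hn. destruct (Hbf n Hn) as [M1 H1]. destruct (Hbg n Hn) as [M2 H2].
    exists (M1 + M2). intros z. specialize (H1 z). specialize (H2 z).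
    assert (Hp : 0 < exp (- Cmod z / INR n)) by apply exp_pos.
    eapply Rle_trans; [apply Rmult_le_compat_r; [lra| apply Cmod_triangle]|]. lra.
Qed.

Lemma E1min_const c : E1min (fun _ => c).
Proof.
  split.
  - intros z. apply ex_derive_const.
  - intros n Hn. exists (Cmod c). intros z.
    assert (exp (- Cmod z / INR n) <= 1).
    { rewrite <- exp_0. apply exp_le_3 || idtac.
      destruct (Rle_lt_or_eq_dec _ _ (Cmod_ge_0 z)) as [h|h].
      - left. apply exp_increasing. assert (0 < INR n) by (apply lt_0_INR; lia).
        assert (0 < Cmod z / INR n) by (apply Rdiv_lt_0_compat; auto). unfold Rdiv in *. lra.
      - rewrite <- h. unfold Rdiv. rewrite Ropp_0, Rmult_0_l. lra. }
    assert (0 <= Cmod c) by apply Cmod_ge_0. nra.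
Qed.

Lemma E1min_scal c f : E1min f -> E1min (fun w => Cmult c (f w)).
Proof.
  intros Hf. apply (E1min_ext (fun w => Cmult (c) (f w))); [auto|].
  assert (H := E1min_const c). destruct H as [Hdc _]. destruct Hf as [Hdf Hbf]. split.
  - intros z. apply exd_mult; auto.
  - intros n Hn. destruct (Hbf n Hn) as [M HM]. exists (Cmod c * M). intros z.
    rewrite Cmod_mult, Rmult_assoc. apply Rmult_le_compat_l; [apply Cmod_ge_0|]. apply HM.
Qed.

Lemma x_le_exp x : x <= exp x.
Proof. assert (H := exp_ineq1_le x). lra. Qed.

Lemma E1min_mulZ f : E1min f -> E1min (fun w => Cmult (f w) w).
Proof.
  intros [Hdf Hbf]. split.
  - intros z. apply exd_mult; auto. apply exd_id.
  - intros n Hn. destruct (Hbf (2 * n)%nat ltac:(lia)) as [M HM].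
    exists (M * (2 * INR n)). intros z. specialize (HM z).
    rewrite Cmod_mult.
    assert (Hn0 : 0 < INR n) by (apply lt_0_INR; lia).
    rewrite mult_INR in HM. replace (INR 2) with 2 in HM by (simpl; ring).
    set (x := Cmod z) in *. assert (Hx : 0 <= x) by apply Cmod_ge_0.
    assert (E : exp (- x / INR n) = exp (- x / (2 * INR n)) * exp (- x / (2 * INR n))).
    { rewrite <- exp_plus. f_equal. field. lra. }
    assert (Hxe : x * exp (- x / (2 * INR n)) <= 2 * INR n).
    { replace (- x / (2 * INR n)) with (- (x / (2 * INR n))) by (field; lra).
      assert (Hx2 : x = 2 * INR n * (x / (2 * INR n))) by (field; lra).
      set (y := x / (2 * INR n)) in *.
      rewrite Hx2 at 1.
      assert (Hy : y * exp (- y) <= 1).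
      { assert (E1 : exp y * exp (- y) = 1) by (rewrite <- exp_plus, Rplus_opp_r; apply exp_0).
        rewrite <- E1. apply Rmult_le_compat_r; [left; apply exp_pos| apply x_le_exp]. }
      replace (2 * INR n * y * exp (- y)) with (2 * INR n * (y * exp (- y))) by ring.
      nra. }
    rewrite E.
    assert (0 <= Cmod (f z)) by apply Cmod_ge_0.
    assert (0 < exp (- x / (2 * INR n))) by apply exp_pos.
    assert (0 <= M).
    { eapply Rle_trans; [|apply HM]. apply Rmult_le_pos; lra. }
    replace (Cmod (f z) * x * (exp (- x / (2 * INR n)) * exp (- x / (2 * INR n))))
      with ((Cmod (f z) * exp (- x / (2 * INR n))) * (x * exp (- x / (2 * INR n)))) by ring.
    apply Rmult_le_compat; auto; apply Rmult_le_pos; lra.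
Qed.

Lemma E1min_pow k : E1min (fun z => Defs.Cpow z k).
Proof.
  induction k as [|k IH].
  - apply (E1min_ext (fun _ => RtoC 1)); [reflexivity|]. apply E1min_const.
  - apply (E1min_ext (fun w => Cmult (Defs.Cpow w k) w)); [reflexivity|].
    apply E1min_mulZ; auto.
Qed.

Lemma E1min_Pm b N : E1min (Pm b N).
Proof.
  induction N as [|N IH].
  - apply (E1min_ext (fun _ => RtoC 0)); [reflexivity|]. apply E1min_const.
  - apply (E1min_ext (fun w => Cplus (Pm b N w) (Cmult (b N) (Defs.Cpow w N)))); [reflexivity|].
    apply E1min_plus; auto. apply E1min_scal, E1min_pow.
Qed.

Lemma small_zero r K : 0 <= K -> (forall eps, 0 < eps -> r <= K * eps) -> r <= 0.
Proof.
  intros HK H. destruct (Rle_or_lt r 0) as [h|h]; auto.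
  specialize (H (r / (2 * (K + 1)))).
  assert (0 < r / (2 * (K + 1))) by (apply Rdiv_lt_0_compat; lra).
  specialize (H H0).
  assert (K * (r / (2 * (K + 1))) < r).
  { unfold Rdiv. rewrite Rinv_mult.
    assert (0 < / (K + 1)) by (apply Rinv_0_lt_compat; lra).
    assert (K * / (K + 1) < 1).
    { apply (Rmult_lt_reg_r (K + 1)); [lra|]. rewrite Rmult_assoc, Rinv_l by lra. lra. }
    assert (0 < / 2) by lra.
    replace (K * (r * (/ 2 * / (K + 1)))) with ((K * / (K + 1)) * (r * / 2)) by ring.
    assert (K * / (K+1) >= 0) by (apply Rle_ge, Rmult_le_pos; lra).
    nra. }
  lra.
Qed.

Lemma key (T : (C -> C) -> (C -> C)) (f : C -> C) (z0 : C)
  (G : (C -> C) -> C) (Good : (C -> C) -> Prop) :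
  E1min_linear T -> E1min_continuous T -> E1min f ->
  (forall P, Good P -> E1min P /\ T P z0 = G P) ->
  (forall m, (1 <= m)%nat -> exists Cz, 0 <= Cz /\ forall eps, 0 < eps ->
     exists P, Good P /\
       wbound m (fun w => Cplus (f w) (Cmult (RtoC (-1)) (P w))) eps /\
       Cmod (Cminus (G f) (G P)) <= Cz * eps) ->
  T f z0 = G f.
Proof.
  intros [TE [Tadd Tsc]] Tc Hf HG Happ.
  destruct (Tc 1%nat (le_n 1)) as [m [K [Hm [HK Hc]]]].
  destruct (Happ m Hm) as [Cz [HCz Hap]].
  apply Cminus_eq_0' || idtac.
  assert (Hz : Cmod (Cminus (T f z0) (G f)) <= 0).
  { apply (small_zero _ (K * exp (Cmod z0) + Cz)).
    { assert (0 < exp (Cmod z0)) by apply exp_pos. nra. }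
    intros eps Heps. destruct (Hap eps Heps) as [P [HP [Hw HGP]]].
    destruct (HG P HP) as [EP TP].
    assert (EmP : E1min (fun w => Cmult (RtoC (-1)) (P w))) by (apply E1min_scal; auto).
    assert (Eg : E1min (fun w => Cplus (f w) (Cmult (RtoC (-1)) (P w)))) by (apply E1min_plus; auto).
    specialize (Hc _ Eg eps Hw z0).
    rewrite Tadd in Hc by auto. rewrite Tsc in Hc by auto. rewrite TP in Hc.
    simpl (INR 1) in Hc. rewrite Rdiv_1_r in Hc.
    assert (Hb : Cmod (Cplus (T f z0) (Cmult (RtoC (-1)) (G P))) <= K * eps * exp (Cmod z0)).
    { assert (E : exp (- Cmod z0) * exp (Cmod z0) = 1) by (rewrite <- exp_plus, Rplus_opp_l; apply exp_0).
      assert (0 < exp (Cmod z0)) by apply exp_pos.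
      assert (0 < exp (- Cmod z0)) by apply exp_pos.
      apply (Rmult_le_reg_r (exp (- Cmod z0))); auto.
      replace (K * eps * exp (Cmod z0) * exp (- Cmod z0)) with (K * eps) by (rewrite Rmult_assoc, (Rmult_comm (exp _)), E; ring).
      auto. }
    replace (Cminus (T f z0) (G f)) with
      (Cplus (Cplus (T f z0) (Cmult (RtoC (-1)) (G P))) (Cminus (G P) (G f))) by ring.
    eapply Rle_trans; [apply Cmod_triangle|].
    assert (Cmod (Cminus (G P) (G f)) = Cmod (Cminus (G f) (G P))).
    { rewrite <- Cmod_opp. f_equal. ring. }
    nra. }
  apply Cminus_eq_0' || idtac.
  assert (Cmod (Cminus (T f z0) (G f)) = 0) by (generalize (Cmod_ge_0 (Cminus (T f z0) (G f))); lra).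
  apply Cmod_eq_0 in H.
  replace (T f z0) with (Cplus (Cminus (T f z0) (G f)) (G f)) by ring. rewrite H. ring.
Qed.



Theorem proposition5p2 :
  forall (alpha sigma : R), 0 < alpha -> 0 < sigma ->
  forall (U V : (C -> C) -> (C -> C)),
    E1min_linear U -> E1min_continuous U ->
    E1min_linear V -> E1min_continuous V ->
    (forall (co : nat -> C) (N : nat) (z : C),
        U (cpoly alpha sigma co N) z = U_poly alpha sigma co N z) ->
    (forall (co : nat -> C) (N : nat) (z : C),
        V (cpoly alpha sigma co N) z = V_poly alpha sigma co N z) ->
    forall f : C -> C, E1min f ->
      forall z : C,
        U f z = Cmult z (f (Cminus z (RtoC alpha))) /\
        V f z = f (Cplus z (RtoC alpha)).
Proof.
  intros alpha sigma Ha Hs U V UL UC VL VC HU HV f Hf z0.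
  set (Good := fun P : C -> C => exists co N b, P = cpoly alpha sigma co N /\
                  forall z, cpoly alpha sigma co N z = Pm b N z).
  assert (GoodE : forall P, Good P -> E1min P).
  { intros P [co [N [b [-> Hb]]]]. apply (E1min_ext (Pm b N)); [intros; auto|apply E1min_Pm]. }
  assert (Gen : forall m, (1 <= m)%nat -> forall eps, 0 < eps -> exists P, Good P /\
       wbound m (fun w => Cplus (f w) (Cmult (RtoC (-1)) (P w))) eps /\
       (forall z, Cmod (Cminus (f z) (P z)) <= eps * exp (Cmod z / INR m))).
  { intros m Hm eps Heps. destruct (approx f Hf m Hm eps Heps) as [b [N Hb]].
    destruct (inS_Pm alpha sigma b N) as [co Hco].
    exists (cpoly alpha sigma co N). split; [exists co, N, b; split; auto|].
    split.
    - intros z. rewrite <- Hco.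
      replace (Cplus (f z) (Cmult (RtoC (-1)) (Pm b N z))) with (Cminus (f z) (Pm b N z)) by ring.
      apply Hb.
    - intros z. rewrite <- Hco. specialize (Hb z).
      assert (E : exp (- Cmod z / INR m) * exp (Cmod z / INR m) = 1).
      { rewrite <- exp_plus. replace (- Cmod z / INR m + Cmod z / INR m) with 0 by (unfold Rdiv; ring). apply exp_0. }
      assert (0 < exp (Cmod z / INR m)) by apply exp_pos.
      assert (0 < exp (- Cmod z / INR m)) by apply exp_pos.
      apply (Rmult_le_reg_r (exp (- Cmod z / INR m))); auto.
      rewrite Rmult_assoc, (Rmult_comm (exp (Cmod z / INR m))), E. lra. }
  split.
  - apply (key U f z0 (fun P => Cmult z0 (P (Cminus z0 (RtoC alpha)))) Good UL UC Hf).
    + intros P HP. split; [apply GoodE; auto|].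
      destruct HP as [co [N [b [-> _]]]]. rewrite HU. apply U_poly_eq.
    + intros m Hm. exists (Cmod z0 * exp (Cmod (Cminus z0 (RtoC alpha)) / INR m)).
      split. { apply Rmult_le_pos; [apply Cmod_ge_0| left; apply exp_pos]. }
      intros eps Heps. destruct (Gen m Hm eps Heps) as [P [HP [Hw Hd]]].
      exists P. split; auto. split; auto.
      replace (Cminus (Cmult z0 (f (Cminus z0 alpha))) (Cmult z0 (P (Cminus z0 alpha))))
        with (Cmult z0 (Cminus (f (Cminus z0 alpha)) (P (Cminus z0 alpha)))) by ring.
      rewrite Cmod_mult. specialize (Hd (Cminus z0 alpha)).
      assert (0 <= Cmod z0) by apply Cmod_ge_0. 
      replace (Cmod z0 * exp (Cmod (Cminus z0 alpha) / INR m) * eps) with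
        (Cmod z0 * (eps * exp (Cmod (Cminus z0 alpha) / INR m))) by ring.
      apply Rmult_le_compat_l; auto.
  - apply (key V f z0 (fun P => P (Cplus z0 (RtoC alpha))) Good VL VC Hf).
    + intros P HP. split; [apply GoodE; auto|].
      destruct HP as [co [N [b [-> _]]]]. rewrite HV. apply V_poly_eq.
    + intros m Hm. exists (exp (Cmod (Cplus z0 (RtoC alpha)) / INR m)).
      split. { left; apply exp_pos. }
      intros eps Heps. destruct (Gen m Hm eps Heps) as [P [HP [Hw Hd]]].
      exists P. split; auto. split; auto.
      rewrite Rmult_comm. apply Hd.
Qed.
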